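(* Let $L$ be an infinite set and consider the edgeless cube $Q_L$. Let $f$ be a legal configuration accessible from $f_{\mathrm{solved}}$ and let $C$ be a non-center cluster, whose unique representative in the quadrant $D$ is $(\alpha,\beta,+\infty)$ with $\alpha\in L$, $\beta\in\{0\}\cup L$. Then there is a finite basic sequence $s$ such that, if $g$ is the terminal configuration of $s$ applied to $f$, then $g(c)=f_{\mathrm{solved}}(c)$ for all $c\in C$ and $g(c)=f(c)$ for all cells $c\notin C$. Moreover, $s$ uses only face twists and basic twists of the form $T_{i,\gamma}^j$ with $i\in\{x,y,z\}$, $\gamma\in\{\alpha,-\alpha,\beta,-\beta\}$, $j\in\{1,2,3\}$.
   Context: Let $L$ be an infinite set, $-L=\{-r:r\in L\}$ a disjoint copy of $L$, and $0$ a new element; $L^\dagger=-L\cup\{0\}\cup L$ with $-(-r)=r$, $-0=0$. Adjoin $\pm\infty$ with $-(+\infty)=-\infty$ and set $\bar L^\dagger=L^\dagger\cup\{\pm\infty\}$. Points of $U=(\bar L^\dagger)^3$ have coordinates $x,y,z$. The edgeless cube $Q_L$ is the set of cells: points of $U$ with exactly one coordinate in $\{\pm\infty\}$. For $i\in\{x,y,z\}$, $\alpha\in\bar L^\dagger$, the quarter-turn twist $T_{i,\alpha}$ is the permutation of cells fixing every cell $p$ with $p_i\ne\alpha$ and acting on the others by $T_{x,\alpha}(\alpha,y,z)=(\alpha,-z,y)$, $T_{y,\alpha}(x,\alpha,z)=(z,\alpha,-x)$, $T_{z,\alpha}(x,y,\alpha)=(-y,x,\alpha)$; face twists are the basic twists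 with $\alpha=\pm\infty$. Basic twists are $T,T^2,T^3$ for quarter-turn twists $T$. A basic sequence is a sequence $\langle\sigma_\eta:\eta<\theta\rangle$ of basic twists of ordinal length $\theta$. A configuration is a map $f$ from cells to the six colors red, white, green, orange, yellow, blue together with a special value NaC; it is legal if it never takes value NaC. The solved configuration $f_{\mathrm{solved}}$ colors a cell red, blue, white, orange, green, yellow according as $x=+\infty$, $y=+\infty$, $z=+\infty$, $x=-\infty$, $y=-\infty$, $z=-\infty$. A twist $\sigma$ acts by $(\sigma f)(c)=f(\sigma^{-1}c)$. Applying $\langle\sigma_\eta:\eta<\theta\rangle$ to $f_0$ produces $f_{\eta+1}=\sigma_\eta f_\eta$, and for limit $\lambda\le\theta$, $f_\lambda(c)$ is the eventually constant value of $f_\eta(c)$ ($\eta<\lambda$) if it exists and NaC otherwise; $f_\theta$ is the terminal configuration. $f$ is accessible from $f_0$ if it is the terminal configuration of some basic sequence applied to $f_0$. The cluster of a cell is its orbit under the group generated by all quarter-turn twists; the six center cells (two coordinates equal to $0$) form the center cluster, and the others are non-center. $D=\{(x,y,+\infty):x\in L,\ y\in\{0\}\cup L\}$; every non-center cluster contains exactly one cell of $D$. *)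

(* Defs.v *)
From Stdlib Require Import List ClassicalEpsilon Relation_Operators.

Inductive Ldag (L : Type) : Type := LNeg (r : L) | LZero | LPos (r : L).
Arguments LNeg {L} r.  Arguments LZero {L}.  Arguments LPos {L} r.

Definition ldneg {L : Type} (a : Ldag L) : Ldag L :=
  match a with LNeg r => LPos r | LZero => LZero | LPos r => LNeg r end.

Inductive coord (L : Type) : Type := Fin (a : Ldag L) | PInf | NInf.
Arguments Fin {L} a.  Arguments PInf {L}.  Arguments NInf {L}.

Definition cneg {L : Type} (c : coord L) : coord L :=
  match c with Fin a => Fin (ldneg a) | PInf => NInf | NInf => PInf end.

Record point (L : Type) : Type := mkP { px : coord L; py : coord L; pz : coord L }.
Arguments mkP {L} _ _ _.  Arguments px {L} _.  Arguments py {L} _.  Arguments pz {L} _.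

Inductive axis : Type := AX | AY | AZ.

Definition pcoord {L : Type} (i : axis) (p : point L) : coord L :=
  match i with AX => px p | AY => py p | AZ => pz p end.

Definition is_inf {L : Type} (c : coord L) : Prop := c = PInf \/ c = NInf.

Definition is_cell {L : Type} (p : point L) : Prop :=
  (is_inf (px p) /\ ~ is_inf (py p) /\ ~ is_inf (pz p)) \/
  (~ is_inf (px p) /\ is_inf (py p) /\ ~ is_inf (pz p)) \/
  (~ is_inf (px p) /\ ~ is_inf (py p) /\ is_inf (pz p)).

Definition qt {L : Type} (i : axis) (a : coord L) (p : point L) : point L :=
  if excluded_middle_informative (pcoord i p = a) then
    match i with
    | AX => mkP (px p) (cneg (pz p)) (py p)
    | AY => mkP (pz p) (py p) (cneg (px p))
    | AZ => mkP (cneg (py p)) (px p) (pz p)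
    end
  else p.

Inductive pow : Type := P1 | P2 | P3.
Definition pow_nat (j : pow) : nat := match j with P1 => 1 | P2 => 2 | P3 => 3 end.

Record twist (L : Type) : Type :=
  mkTw { tw_axis : axis; tw_level : coord L; tw_pow : pow }.
Arguments mkTw {L} _ _ _.
Arguments tw_axis {L} _.  Arguments tw_level {L} _.  Arguments tw_pow {L} _.

Definition twist_fun {L : Type} (t : twist L) (p : point L) : point L :=
  Nat.iter (pow_nat (tw_pow t)) (qt (tw_axis t) (tw_level t)) p.
Definition twist_inv {L : Type} (t : twist L) (p : point L) : point L :=
  Nat.iter (4 - pow_nat (tw_pow t)) (qt (tw_axis t) (tw_level t)) p.

Definition is_face {L : Type} (t : twist L) : Prop := is_inf (tw_level t).

Inductive color : Type := Red | White | Green | Orange | Yellow | Blue.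

(* configurations; None = NaC.  Only values on cells are meaningful. *)
Definition config (L : Type) : Type := point L -> option color.

Definition legal {L : Type} (f : config L) : Prop :=
  forall c, is_cell c -> f c <> None.

Definition solved (L : Type) : config L := fun p =>
  match px p, py p, pz p with
  | PInf, _, _ => Some Red
  | _, PInf, _ => Some Blue
  | _, _, PInf => Some White
  | NInf, _, _ => Some Orange
  | _, NInf, _ => Some Green
  | _, _, NInf => Some Yellow
  | _, _, _ => None
  end.

Definition act {L : Type} (t : twist L) (f : config L) : config L :=
  fun c => f (twist_inv t c).

(* a well-order on W: strict, well-founded, transitive, total; W with lt
   plays the role of the ordinal theta *)
Definition well_order {W : Type} (lt : W -> W -> Prop) : Prop :=
  well_founded lt /\ (forall a b c, lt a b -> lt b c -> lt a c) /\
  (forall a b, lt a b \/ a = b \/ lt b a).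

(* stages eta <= theta : Some w for w in W, None for theta itself *)
Definition slt {W : Type} (lt : W -> W -> Prop) (s t : option W) : Prop :=
  match s, t with
  | Some a, Some b => lt a b
  | Some _, None => True
  | None, _ => False
  end.

(* F is the run of the basic sequence sigma (indexed by W) applied to f0:
   F s = f_s for each stage s <= theta (checked on cells). *)
Definition Run {L W : Type} (lt : W -> W -> Prop) (sigma : W -> twist L)
    (f0 : config L) (F : option W -> config L) : Prop :=
  forall s : option W,
    (* s = 0 *)
    ((forall t, ~ slt lt t s) -> forall c, is_cell c -> F s c = f0 c) /\
    (* s = w + 1 *)
    (forall w, slt lt (Some w) s -> (forall t, ~ (slt lt (Some w) t /\ slt lt t s)) ->
       forall c, is_cell c -> F s c = act (sigma w) (F (Some w)) c) /\
    (* s limit *)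
    ((exists t, slt lt t s) -> (forall t, slt lt t s -> exists u, slt lt t u /\ slt lt u s) ->
       forall c, is_cell c ->
         (forall v, (exists t, slt lt t s /\
                      forall u, (u = t \/ slt lt t u) -> slt lt u s -> F u c = v) ->
                    F s c = v) /\
         ((~ exists v t, slt lt t s /\
                      forall u, (u = t \/ slt lt t u) -> slt lt u s -> F u c = v) ->
          F s c = None)).

Definition accessible {L : Type} (f0 f : config L) : Prop :=
  exists (W : Type) (lt : W -> W -> Prop) (sigma : W -> twist L)
         (F : option W -> config L),
    well_order lt /\ Run lt sigma f0 F /\ forall c, is_cell c -> F None c = f c.

(* finite basic sequence applied to f (first element applied first) *)
Definition apply_list {L : Type} (s : list (twist L)) (f : config L) : config L :=
  fold_left (fun g t => act t g) s f.

(* same cluster: orbit under the group generated by quarter-turn twists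
   (each has order 4, so the orbit is the reflexive-transitive closure) *)
Definition same_cluster {L : Type} (c d : point L) : Prop :=
  clos_refl_trans (point L) (fun p q => exists i a, q = qt i a p) c d.

Definition infinite_type (L : Type) : Prop :=
  ~ exists s : list L, forall x : L, In x s.

(* Main.v *)
Require Import Defs.
From Stdlib Require Import List Arith Lia Bool Permutation Classical ClassicalEpsilon Relation_Operators Operators_Properties.
Import ListNotations.


Inductive sym := SA | SnA | SB | SnB | SI | SnI.
Definition sym_eqb (a b : sym) : bool :=
  match a, b with SA,SA|SnA,SnA|SB,SB|SnB,SnB|SI,SI|SnI,SnI => true | _,_ => false end.
Lemma sym_eqb_spec a b : sym_eqb a b = true <-> a = b.
Proof. destruct a, b; simpl; split; congruence. Qed.
Definition sneg s := match s with SA=>SnA|SnA=>SA|SB=>SnB|SnB=>SB|SI=>SnI|SnI=>SI end.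
Inductive cs := Gen | Zer | Sam.
Definition norm c s := match c, s with Zer, SnB => SB | Sam, SB => SA | Sam, SnB => SnA | _, _ => s end.
Inductive mc := Sy (s:sym) | Ot (k:axis) (b:bool).
Definition axis_eqb (a b : axis) : bool :=
  match a, b with AX,AX|AY,AY|AZ,AZ => true | _,_ => false end.
Definition mc_eqb (x y : mc) : bool :=
  match x, y with Sy a, Sy b => sym_eqb a b | Ot k b, Ot k' b' => axis_eqb k k' && Bool.eqb b b' | _, _ => false end.
Record mpt := MP {m1:mc; m2:mc; m3:mc}.
Definition mpt_eqb (p q : mpt) : bool := mc_eqb (m1 p) (m1 q) && mc_eqb (m2 p) (m2 q) && mc_eqb (m3 p) (m3 q).
Lemma mc_eqb_spec x y : mc_eqb x y = true -> x = y.
Proof. destruct x as [a|k b], y as [a'|k' b']; simpl; try discriminate.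
  - intro H; apply sym_eqb_spec in H; congruence.
  - intro H; apply andb_true_iff in H; destruct H as [H1 H2].
    apply Bool.eqb_prop in H2; destruct k, k'; simpl in H1; try discriminate; congruence. Qed.
Lemma mpt_eqb_spec p q : mpt_eqb p q = true -> p = q.
Proof. destruct p, q; unfold mpt_eqb; simpl; intro H.
  apply andb_true_iff in H as [H H3]; apply andb_true_iff in H as [H1 H2].
  apply mc_eqb_spec in H1, H2, H3; congruence. Qed.

Definition mneg c x := match x with Sy s => Sy (norm c (sneg s)) | Ot k b => Ot k (negb b) end.
Definition meq c x s0 := match x with Sy s => sym_eqb (norm c s) (norm c s0) | Ot _ _ => false end.
Definition mpc i m := match i with AX => m1 m | AY => m2 m | AZ => m3 m end.
Definition qtm c i s0 m :=
  if meq c (mpc i m) s0 then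
    match i with
    | AX => MP (m1 m) (mneg c (m3 m)) (m2 m)
    | AY => MP (m3 m) (m2 m) (mneg c (m1 m))
    | AZ => MP (mneg c (m2 m)) (m1 m) (m3 m)
    end
  else m.
Definition mtw := (axis * sym * pow)%type.
Definition tinvm c (t:mtw) m := let '(i,s,k) := t in Nat.iter (4 - pow_nat k) (qtm c i s) m.
Definition phim c (w : list mtw) m := fold_right (tinvm c) m w.

Definition esym {L} (alpha:L) (beta:Ldag L) (s:sym) : coord L :=
  match s with SA => Fin (LPos alpha) | SnA => Fin (LNeg alpha) | SB => Fin beta
  | SnB => Fin (ldneg beta) | SI => PInf | SnI => NInf end.
Definition chyp {L} (alpha:L) (beta : Ldag L) c : Prop :=
  match c with Gen => exists b, beta = LPos b /\ b <> alpha | Zer => beta = LZero | Sam => beta = LPos alpha end.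

Lemma e_inj {L} (alpha:L) beta c s t : chyp alpha beta c ->
  (esym alpha beta s = esym alpha beta t <-> norm c s = norm c t).
Proof.
  destruct c; simpl; intro H; [destruct H as [b [-> Hb]] | subst | subst];
  destruct s, t; simpl; split; intro E; try reflexivity; try discriminate;
  try (inversion E; subst; congruence).
Qed.
Lemma norm_idem c s : norm c (norm c s) = norm c s.
Proof. destruct c, s; reflexivity. Qed.
Lemma e_norm {L} (alpha:L) beta c s : chyp alpha beta c -> esym alpha beta (norm c s) = esym alpha beta s.
Proof. intro H. apply (e_inj alpha beta c); auto. apply norm_idem. Qed.
Lemma cneg_inv {L} (x : coord L) : cneg (cneg x) = x.
Proof. destruct x as [[]| |]; reflexivity. Qed.
Lemma e_neg {L} (alpha:L) beta s : esym alpha beta (sneg s) = cneg (esym alpha beta s).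
Proof. destruct s; simpl; try reflexivity. destruct beta; reflexivity. Qed.

Definition icoord {L} alpha beta (p:point L) (x:mc) : coord L :=
  match x with Sy s => esym alpha beta s | Ot k b => if b then pcoord k p else cneg (pcoord k p) end.
Definition interp {L} (alpha:L) beta p m :=
  mkP (icoord alpha beta p (m1 m)) (icoord alpha beta p (m2 m)) (icoord alpha beta p (m3 m)).
Definition nonsym {L} (alpha:L) beta (x:coord L) := forall s, x <> esym alpha beta s.
Definition goodc {L} (alpha:L) beta (p : point L) x :=
  match x with Sy _ => True | Ot k _ => nonsym alpha beta (pcoord k p) end.
Definition good {L} (alpha:L) beta p m :=
  goodc alpha beta p (m1 m) /\ goodc alpha beta p (m2 m) /\ goodc alpha beta p (m3 m).

Lemma icoord_neg {L} (alpha:L) beta c p x : chyp alpha beta c ->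
  icoord alpha beta p (mneg c x) = cneg (icoord alpha beta p x).
Proof. intro H; destruct x as [s|k b]; simpl.
  - rewrite e_norm by auto. apply e_neg.
  - destruct b; simpl; auto. symmetry; apply cneg_inv. Qed.

Lemma nonsym_neg {L} (alpha:L) beta x : nonsym alpha beta x -> nonsym alpha beta (cneg x).
Proof. intros H s E. apply (H (sneg s)). rewrite e_neg, <- E. symmetry; apply cneg_inv. Qed.

Lemma icoord_eq {L} (alpha:L) beta c p x s0 : chyp alpha beta c -> goodc alpha beta p x ->
  (icoord alpha beta p x = esym alpha beta s0 <-> meq c x s0 = true).
Proof. intros H G; destruct x as [s|k b]; simpl in *.
  - rewrite sym_eqb_spec. apply e_inj; auto.
  - split; [|discriminate]. intro E. exfalso. destruct b.
    + exact (G s0 E).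
    + exact (nonsym_neg _ _ _ G s0 E). Qed.

Lemma pcoord_interp {L} (alpha:L) beta p m i :
  pcoord i (interp alpha beta p m) = icoord alpha beta p (mpc i m).
Proof. destruct i; reflexivity. Qed.

Lemma goodc_neg {L} (alpha:L) beta c p x : goodc alpha beta p x -> goodc alpha beta p (mneg c x).
Proof. destruct x; simpl; auto. Qed.

Lemma qt_interp {L} (alpha:L) beta c p m i s0 : chyp alpha beta c -> good alpha beta p m ->
  qt i (esym alpha beta s0) (interp alpha beta p m) = interp alpha beta p (qtm c i s0 m) /\
  good alpha beta p (qtm c i s0 m).
Proof.
  intros H G. unfold qt, qtm.
  destruct (excluded_middle_informative _) as [E|E];
  rewrite pcoord_interp in E.
  - assert (Hm : meq c (mpc i m) s0 = true).
    { apply (icoord_eq alpha beta c p); auto. destruct G as [? [? ?]]; destruct i; auto. }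
    rewrite Hm. destruct G as [G1 [G2 G3]].
    destruct i; unfold interp; simpl; rewrite ?(icoord_neg alpha beta c) by auto;
    repeat split; auto; apply goodc_neg; auto.
  - destruct (meq c (mpc i m) s0) eqn:Hm; auto.
    exfalso; apply E. apply (icoord_eq alpha beta c p); auto.
    destruct G as [? [? ?]]; destruct i; auto.
Qed.

Definition rtw {L} (alpha:L) beta (t:mtw) : twist L :=
  let '(i,s,k) := t in mkTw i (esym alpha beta s) k.
Definition Phi {L} (s : list (twist L)) (x : point L) : point L :=
  fold_right (fun t acc => twist_inv t acc) x s.

Lemma apply_list_Phi {L} (s : list (twist L)) f x : apply_list s f x = f (Phi s x).
Proof. revert f; induction s as [|t s IH]; intro f; [reflexivity|].
  change (apply_list s (act t f) x = f (twist_inv t (Phi s x))). rewrite IH. reflexivity. Qed.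

Lemma iter_interp {L} (alpha:L) beta c p m i s0 n : chyp alpha beta c -> good alpha beta p m ->
  Nat.iter n (qt i (esym alpha beta s0)) (interp alpha beta p m) =
    interp alpha beta p (Nat.iter n (qtm c i s0) m) /\ good alpha beta p (Nat.iter n (qtm c i s0) m).
Proof. intros H G; induction n as [|n IH]; simpl; auto.
  destruct IH as [E G']. rewrite E. apply qt_interp; auto. Qed.

Lemma Phi_interp {L} (alpha:L) beta c p w m : chyp alpha beta c -> good alpha beta p m ->
  Phi (map (rtw alpha beta) w) (interp alpha beta p m) = interp alpha beta p (phim c w m) /\
  good alpha beta p (phim c w m).
Proof. intros H G; induction w as [|[[i s] k] w IH]; simpl; auto.
  destruct IH as [E G']. rewrite E. unfold twist_inv; simpl. apply iter_interp; auto. Qed.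


Definition allsyms := [SA;SnA;SB;SnB;SI;SnI].
Definition absc {L} (alpha:L) beta c (x : coord L) (k:axis) : mc :=
  if excluded_middle_informative (x = esym alpha beta SA) then Sy (norm c SA) else
  if excluded_middle_informative (x = esym alpha beta SnA) then Sy (norm c SnA) else
  if excluded_middle_informative (x = esym alpha beta SB) then Sy (norm c SB) else
  if excluded_middle_informative (x = esym alpha beta SnB) then Sy (norm c SnB) else
  if excluded_middle_informative (x = esym alpha beta SI) then Sy (norm c SI) else
  if excluded_middle_informative (x = esym alpha beta SnI) then Sy (norm c SnI) else
  Ot k true.
Definition absp {L} (alpha:L) beta c (p : point L) : mpt :=
  MP (absc alpha beta c (px p) AX) (absc alpha beta c (py p) AY) (absc alpha beta c (pz p) AZ).

Definition clist c k := map (fun s => Sy (norm c s)) allsyms ++ [Ot k true].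

Lemma absc_prop {L} (alpha:L) beta c p k : chyp alpha beta c ->
  icoord alpha beta p (absc alpha beta c (pcoord k p) k) = pcoord k p /\
  goodc alpha beta p (absc alpha beta c (pcoord k p) k) /\
  In (absc alpha beta c (pcoord k p) k) (clist c k).
Proof. intro H. unfold absc, clist.
  repeat (destruct (excluded_middle_informative _) as [E|?];
    [simpl; rewrite e_norm by auto; split; [auto|split; [exact I| simpl; tauto]]|]).
  simpl. split; auto. split.
  - intros s E. destruct s; auto.
  - repeat (first [left; reflexivity | right]).
Qed.

Definition Alist c : list mpt :=
  flat_map (fun a => flat_map (fun b => map (fun d => MP a b d) (clist c AZ)) (clist c AY)) (clist c AX).

Lemma absp_prop {L} (alpha:L) beta c p : chyp alpha beta c ->
  interp alpha beta p (absp alpha beta c p) = p /\ good alpha beta p (absp alpha beta c p) /\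
  In (absp alpha beta c p) (Alist c).
Proof. intro H.
  destruct (absc_prop alpha beta c p AX H) as [E1 [G1 I1]].
  destruct (absc_prop alpha beta c p AY H) as [E2 [G2 I2]].
  destruct (absc_prop alpha beta c p AZ H) as [E3 [G3 I3]].
  simpl in E1, E2, E3.
  split; [unfold interp, absp; simpl; rewrite E1, E2, E3; destruct p; reflexivity|].
  split; [unfold good, absp; simpl; tauto|].
  unfold Alist, absp. apply in_flat_map. eexists; split; [exact I1|].
  apply in_flat_map. eexists; split; [exact I2|]. apply in_map. exact I3.
Qed.

Definition isinfc (x : mc) : bool := match x with Sy SI | Sy SnI => true | _ => false end.
Definition mcell (m : mpt) : bool :=
  let a := isinfc (m1 m) in let b := isinfc (m2 m) in let d := isinfc (m3 m) in
  (a && negb b && negb d) || (negb a && b && negb d) || (negb a && negb b && d).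



Definition p0 {L} : point L := mkP PInf PInf PInf.
Definition interpS {L} (alpha:L) beta m := interp alpha beta p0 m.
Definition allsy (m : mpt) : bool :=
  match m with MP (Sy _) (Sy _) (Sy _) => true | _ => false end.
Lemma allsy_good {L} (alpha:L) beta p m : allsy m = true -> good alpha beta p m.
Proof. destruct m as [[] [] []]; simpl; try discriminate; repeat split. Qed.
Lemma allsy_interp {L} (alpha:L) beta p m : allsy m = true -> interp alpha beta p m = interpS alpha beta m.
Proof. destruct m as [[] [] []]; simpl; try discriminate; reflexivity. Qed.

Definition msol (m : mpt) : option color :=
  match m with
  | MP (Sy SI) _ _ => Some Red
  | MP _ (Sy SI) _ => Some Blue
  | MP _ _ (Sy SI) => Some White
  | MP (Sy SnI) _ _ => Some Orange
  | MP _ (Sy SnI) _ => Some Green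
  | MP _ _ (Sy SnI) => Some Yellow
  | _ => None end.
Lemma solved_interp {L} (alpha:L) beta m : allsy m = true -> solved L (interpS alpha beta m) = msol m.
Proof. destruct m as [[a|] [b|] [d|]]; simpl; try discriminate; intros _;
  destruct a, b, d; reflexivity. Qed.

Lemma isinf_iff {L} (alpha:L) beta p x : goodc alpha beta p x ->
  (is_inf (icoord alpha beta p x) <-> isinfc x = true).
Proof. unfold is_inf. destruct x as [s|k b]; simpl; intro G.
  - destruct s; simpl; split; intro E; try (destruct E as [E|E]; discriminate); try discriminate; auto.
  - split; [|discriminate]. intros [E|E]; exfalso.
    + destruct b; [apply (G SI)|apply (nonsym_neg _ _ _ G SI)]; exact E.
    + destruct b; [apply (G SnI)|apply (nonsym_neg _ _ _ G SnI)]; exact E.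
Qed.

Lemma cell_iff {L} (alpha:L) beta p m : good alpha beta p m ->
  (is_cell (interp alpha beta p m) <-> mcell m = true).
Proof. intros [G1 [G2 G3]]. unfold is_cell, mcell, interp; simpl.
  pose proof (isinf_iff alpha beta p _ G1) as H1.
  pose proof (isinf_iff alpha beta p _ G2) as H2.
  pose proof (isinf_iff alpha beta p _ G3) as H3.
  destruct (isinfc (m1 m)), (isinfc (m2 m)), (isinfc (m3 m)); simpl;
  repeat match goal with H : _ <-> true = true |- _ => destruct H as [_ H]; specialize (H eq_refl)
                      | H : _ <-> false = true |- _ => 
                         let H' := fresh in assert (H' := proj1 H); clear H end;
  split; intro; try discriminate; try tauto;
  repeat match goal with H : _ -> false = true |- _ => 
     let X := fresh in assert (X : ~ (is_inf _)) by (intro Y; apply H in Y; discriminate); clear H end;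
  tauto.
Qed.

Definition S_Gen : list mpt := [MP (Sy SA) (Sy SI) (Sy SnB); MP (Sy SnA) (Sy SI) (Sy SB); MP (Sy SB) (Sy SI) (Sy SA); MP (Sy SnB) (Sy SI) (Sy SnA); MP (Sy SA) (Sy SnI) (Sy SB); MP (Sy SnA) (Sy SnI) (Sy SnB); MP (Sy SB) (Sy SnI) (Sy SnA); MP (Sy SnB) (Sy SnI) (Sy SA); MP (Sy SnI) (Sy SA) (Sy SnB); MP (Sy SnI) (Sy SnA) (Sy SB); MP (Sy SnI) (Sy SB) (Sy SA); MP (Sy SnI) (Sy SnB) (Sy SnA); MP (Sy SI) (Sy SA) (Sy SB); MP (Sy SI) (Sy SnA) (Sy SnB); MP (Sy SI) (Sy SB) (Sy SnA); MP (Sy SI) (Sy SnB) (Sy SA); MP (Sy SA) (Sy SB) (Sy SI); MP (Sy SnA) (Sy SnB) (Sy SI); MP (Sy SB) (Sy SnA) (Sy SI); MP (Sy SnB) (Sy SA) (Sy SI); MP (Sy SA) (Sy SnB) (Sy SnI); MP (Sy SnA) (Sy SB) (Sy SnI); MP (Sy SB) (Sy SA) (Sy SnI); MP (Sy SnB) (Sy SnA) (Sy SnI)].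
Definition X_Gen : list (nat*nat*list mtw) := [(0,1,[(AX,SB,P1); (AX,SnA,P1); (AZ,SI,P1)]);
 (0,2,[(AX,SnA,P3); (AY,SB,P2); (AX,SB,P1)]);
 (0,3,[(AX,SnB,P1); (AX,SnA,P1); (AZ,SI,P2)]);
 (0,4,[(AX,SA,P3); (AZ,SI,P3); (AY,SI,P2); (AX,SA,P1)]);
 (0,5,[(AX,SnA,P3); (AZ,SI,P1); (AY,SB,P2)]);
 (0,6,[(AX,SnA,P3); (AY,SB,P2); (AX,SB,P3)]);
 (0,7,[(AX,SnB,P3); (AX,SnA,P1); (AZ,SI,P2)]);
 (0,8,[(AY,SA,P1); (AX,SnA,P1); (AZ,SI,P2)]);
 (0,9,[(AX,SnA,P3); (AY,SB,P2); (AY,SnA,P1)]);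
 (0,10,[(AZ,SA,P3); (AX,SnA,P3); (AY,SB,P2); (AX,SB,P1)]);
 (0,11,[(AZ,SnA,P1); (AX,SnA,P3); (AY,SB,P2); (AX,SB,P3)]);
 (0,12,[(AY,SA,P3); (AX,SnA,P1); (AZ,SI,P2)]);
 (0,13,[(AX,SnA,P3); (AY,SB,P2); (AY,SnA,P3)]);
 (0,14,[(AX,SnA,P3); (AY,SB,P2); (AZ,SA,P3); (AX,SB,P1)]);
 (0,15,[(AZ,SA,P1); (AX,SnA,P3); (AY,SB,P2); (AX,SB,P1)]);
 (0,16,[(AZ,SI,P3); (AX,SnA,P3); (AY,SB,P2)]);
 (0,17,[(AZ,SI,P1); (AX,SnA,P3); (AY,SB,P2)]);
 (0,18,[(AX,SnA,P3); (AY,SB,P2)]);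
 (0,19,[(AX,SnA,P1); (AZ,SI,P2)]);
 (0,20,[(AZ,SnI,P1); (AX,SnA,P3); (AY,SB,P2); (AX,SB,P2)]);
 (0,21,[(AZ,SnI,P3); (AX,SnA,P3); (AY,SB,P2); (AX,SB,P2)]);
 (0,22,[(AX,SnA,P3); (AY,SB,P2); (AX,SB,P2)]);
 (0,23,[(AX,SnA,P3); (AY,SB,P2); (AY,SnA,P2)]);
 (1,2,[(AX,SB,P1); (AY,SI,P2); (AZ,SA,P1); (AY,SB,P1)]);
 (1,3,[(AZ,SA,P1); (AY,SI,P2); (AY,SB,P1); (AX,SB,P1)]);
 (1,4,[(AX,SA,P3); (AY,SI,P2); (AX,SnB,P1); (AZ,SI,P3)]);
 (1,5,[(AX,SB,P1); (AY,SI,P2); (AX,SnA,P3); (AZ,SI,P1)]);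
 (1,6,[(AY,SI,P1); (AX,SB,P3); (AZ,SnI,P3); (AX,SA,P1)]);
 (1,7,[(AY,SI,P2); (AX,SnB,P1); (AZ,SI,P3); (AY,SnA,P2)]);
 (1,8,[(AZ,SA,P1); (AY,SI,P2); (AY,SB,P1); (AY,SA,P3); (AX,SB,P2)]);
 (1,9,[(AZ,SA,P1); (AY,SI,P2); (AY,SB,P1); (AY,SnA,P1)]);
 (1,10,[(AY,SI,P2); (AY,SB,P1); (AX,SnB,P1); (AZ,SI,P3)]);
 (1,11,[(AY,SnB,P1); (AX,SB,P1); (AZ,SI,P1); (AY,SI,P2)]);
 (1,12,[(AZ,SB,P2); (AX,SA,P1); (AY,SI,P1); (AY,SnA,P1); (AX,SA,P1)]);
 (1,13,[(AZ,SA,P1); (AY,SI,P2); (AY,SB,P1); (AY,SnA,P3)]);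
 (1,14,[(AY,SI,P2); (AZ,SnA,P3); (AY,SB,P3); (AX,SB,P3)]);
 (1,15,[(AZ,SA,P1); (AX,SB,P1); (AY,SI,P2); (AY,SB,P1)]);
 (1,16,[(AY,SI,P2); (AX,SnB,P1); (AZ,SI,P3)]);
 (1,17,[(AX,SB,P1); (AZ,SI,P1); (AY,SI,P2)]);
 (1,18,[(AZ,SA,P1); (AY,SI,P2); (AY,SB,P1)]);
 (1,19,[(AZ,SI,P2); (AZ,SA,P1); (AY,SI,P2); (AY,SB,P1)]);
 (1,20,[(AY,SnB,P2); (AX,SB,P1); (AZ,SI,P1); (AY,SI,P2)]);
 (1,21,[(AX,SB,P1); (AX,SnA,P2); (AZ,SI,P1); (AZ,SnB,P2)]);
 (1,22,[(AZ,SA,P1); (AY,SI,P2); (AY,SB,P1); (AX,SB,P2)]);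
 (1,23,[(AZ,SA,P1); (AY,SI,P2); (AY,SB,P1); (AY,SnA,P2)]);
 (2,3,[(AZ,SnA,P2); (AX,SA,P3); (AY,SI,P1); (AX,SB,P3)]);
 (2,4,[(AX,SnB,P1); (AX,SA,P3); (AZ,SI,P3); (AY,SI,P1)]);
 (2,5,[(AY,SI,P1); (AX,SnA,P3); (AZ,SI,P1); (AY,SB,P2)]);
 (2,6,[(AX,SB,P3); (AZ,SnI,P3); (AY,SI,P3); (AX,SA,P1)]);
 (2,7,[(AX,SnB,P1); (AZ,SI,P3); (AY,SI,P1); (AY,SnA,P2)]);
 (2,8,[(AY,SI,P1); (AY,SA,P1); (AX,SnA,P1); (AZ,SI,P2)]);
 (2,9,[(AY,SI,P1); (AX,SnA,P3); (AY,SB,P2); (AY,SnA,P1)]);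
 (2,10,[(AY,SB,P1); (AX,SnB,P1); (AZ,SI,P3); (AY,SI,P1)]);
 (2,11,[(AZ,SA,P3); (AY,SnB,P1); (AZ,SI,P1); (AY,SI,P3); (AX,SA,P1)]);
 (2,12,[(AY,SI,P1); (AY,SA,P3); (AX,SnA,P1); (AZ,SI,P2)]);
 (2,13,[(AY,SI,P1); (AX,SnA,P3); (AY,SB,P2); (AY,SnA,P3)]);
 (2,14,[(AZ,SnA,P3); (AY,SI,P1); (AY,SB,P3); (AX,SB,P3)]);
 (2,15,[(AY,SI,P1); (AZ,SA,P1); (AX,SnA,P3); (AY,SB,P2); (AX,SB,P1)]);
 (2,16,[(AX,SnB,P1); (AZ,SI,P3); (AY,SI,P1)]);
 (2,17,[(AZ,SI,P1); (AY,SI,P1); (AX,SnA,P3); (AY,SB,P2)]);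
 (2,18,[(AY,SI,P1); (AX,SnA,P3); (AY,SB,P2)]);
 (2,19,[(AY,SI,P1); (AX,SnA,P1); (AZ,SI,P2)]);
 (2,20,[(AX,SnB,P1); (AX,SA,P2); (AZ,SI,P3); (AY,SI,P1)]);
 (2,21,[(AY,SB,P2); (AX,SnB,P1); (AZ,SI,P3); (AY,SI,P1)]);
 (2,22,[(AY,SI,P1); (AX,SnA,P3); (AY,SB,P2); (AX,SB,P2)]);
 (2,23,[(AY,SI,P1); (AX,SnA,P3); (AY,SB,P2); (AY,SnA,P2)]);
 (3,4,[(AY,SI,P3); (AX,SA,P3); (AZ,SI,P3); (AZ,SnB,P2); (AX,SA,P1)]);
 (3,5,[(AX,SA,P3); (AZ,SnB,P2); (AY,SI,P3); (AX,SB,P1)]);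
 (3,6,[(AX,SA,P3); (AY,SI,P3); (AX,SB,P3)]);
 (3,7,[(AX,SnB,P1); (AZ,SI,P3); (AY,SnA,P2); (AX,SA,P3)]);
 (3,8,[(AX,SA,P3); (AZ,SnB,P3); (AY,SI,P3); (AX,SB,P1)]);
 (3,9,[(AX,SA,P3); (AY,SI,P3); (AY,SnA,P1)]);
 (3,10,[(AY,SB,P1); (AX,SnB,P1); (AZ,SI,P3); (AX,SA,P3)]);
 (3,11,[(AX,SA,P3); (AY,SI,P3); (AZ,SnA,P1); (AX,SB,P3)]);
 (3,12,[(AX,SA,P3); (AY,SI,P3); (AY,SA,P1); (AX,SB,P2)]);
 (3,13,[(AX,SA,P3); (AY,SI,P3); (AY,SnA,P3)]);
 (3,14,[(AZ,SnA,P3); (AY,SB,P3); (AX,SB,P3); (AX,SA,P3)]);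
 (3,15,[(AX,SA,P3); (AY,SI,P3); (AZ,SA,P1); (AX,SB,P1)]);
 (3,16,[(AX,SnB,P1); (AZ,SI,P3); (AX,SA,P3)]);
 (3,17,[(AZ,SI,P1); (AX,SA,P3); (AY,SI,P3)]);
 (3,18,[(AX,SA,P3); (AY,SI,P3)]);
 (3,19,[(AZ,SI,P2); (AX,SA,P3); (AY,SI,P3)]);
 (3,20,[(AZ,SnI,P1); (AX,SA,P3); (AY,SI,P3); (AX,SB,P2)]);
 (3,21,[(AY,SB,P2); (AX,SnB,P1); (AZ,SI,P3); (AX,SA,P3)]);
 (3,22,[(AX,SA,P3); (AY,SI,P3); (AX,SB,P2)]);
 (3,23,[(AX,SA,P3); (AY,SI,P3); (AY,SnA,P2)]);
 (4,5,[(AX,SA,P3); (AY,SnI,P3); (AX,SB,P3); (AX,SA,P3)]);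
 (4,6,[(AX,SA,P1); (AZ,SnB,P2); (AX,SB,P3); (AX,SA,P1)]);
 (4,7,[(AX,SA,P3); (AY,SnI,P2); (AX,SB,P3); (AX,SA,P3)]);
 (4,8,[(AX,SA,P1); (AZ,SnB,P2); (AY,SnA,P3); (AX,SA,P1)]);
 (4,9,[(AX,SA,P1); (AZ,SnB,P2); (AY,SnA,P1); (AX,SA,P1)]);
 (4,10,[(AX,SA,P1); (AZ,SnB,P2); (AZ,SA,P3); (AX,SB,P1); (AX,SA,P1)]);
 (4,11,[(AX,SA,P1); (AZ,SnB,P2); (AZ,SnA,P1); (AX,SB,P3); (AX,SA,P1)]);
 (4,12,[(AY,SA,P3); (AX,SnA,P3); (AX,SA,P2); (AZ,SI,P2)]);
 (4,13,[(AY,SnA,P3); (AX,SA,P1); (AZ,SnB,P2); (AX,SA,P1)]);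
 (4,14,[(AX,SA,P1); (AZ,SnB,P2); (AZ,SnA,P3); (AX,SB,P3); (AX,SA,P1)]);
 (4,15,[(AX,SA,P1); (AZ,SnB,P2); (AZ,SA,P1); (AX,SB,P1); (AX,SA,P1)]);
 (4,16,[(AZ,SI,P3); (AX,SA,P1); (AZ,SnB,P2); (AX,SA,P1)]);
 (4,17,[(AZ,SI,P1); (AX,SA,P1); (AZ,SnB,P2); (AX,SA,P1)]);
 (4,18,[(AX,SA,P1); (AZ,SnB,P2); (AX,SA,P1)]);
 (4,19,[(AX,SnA,P3); (AX,SA,P2); (AZ,SI,P2)]);
 (4,20,[(AX,SnA,P3); (AY,SnB,P2); (AZ,SI,P1); (AX,SA,P2)]);
 (4,21,[(AZ,SnI,P3); (AX,SA,P1); (AZ,SnB,P2); (AX,SB,P2); (AX,SA,P1)]);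
 (4,22,[(AX,SA,P1); (AZ,SnB,P2); (AX,SB,P2); (AX,SA,P1)]);
 (4,23,[(AX,SA,P1); (AZ,SnB,P2); (AY,SnA,P2); (AX,SA,P1)]);
 (5,6,[(AZ,SnB,P2); (AZ,SA,P3); (AY,SB,P1); (AX,SB,P3)]);
 (5,7,[(AY,SnI,P2); (AZ,SA,P1); (AY,SnB,P1); (AX,SB,P3); (AX,SA,P2)]);
 (5,8,[(AZ,SnB,P2); (AZ,SnA,P1); (AY,SB,P3); (AY,SnA,P3)]);
 (5,9,[(AZ,SnB,P2); (AZ,SnA,P1); (AY,SB,P3); (AY,SnA,P1)]);
 (5,10,[(AZ,SA,P3); (AX,SB,P1); (AZ,SnI,P3); (AY,SnI,P2); (AX,SA,P2)]);
 (5,11,[(AZ,SnB,P2); (AZ,SnA,P1); (AY,SB,P3); (AX,SB,P3)]);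
 (5,12,[(AY,SA,P3); (AX,SnA,P3); (AZ,SI,P2); (AY,SnI,P3); (AX,SA,P3)]);
 (5,13,[(AY,SnA,P3); (AZ,SnB,P2); (AZ,SnA,P1); (AY,SB,P3)]);
 (5,14,[(AZ,SnA,P3); (AX,SB,P3); (AY,SnI,P2); (AY,SnB,P3); (AX,SA,P2)]);
 (5,15,[(AY,SnB,P3); (AX,SB,P3); (AZ,SI,P1); (AZ,SnB,P2)]);
 (5,16,[(AZ,SI,P3); (AZ,SnB,P2); (AZ,SnA,P1); (AY,SB,P3)]);
 (5,17,[(AX,SB,P3); (AZ,SI,P1); (AZ,SnB,P2)]);
 (5,18,[(AZ,SnB,P2); (AZ,SnA,P1); (AY,SB,P3)]);
 (5,19,[(AX,SnA,P3); (AZ,SI,P2); (AY,SnI,P3); (AX,SA,P3)]);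
 (5,20,[(AY,SnB,P2); (AX,SB,P3); (AZ,SI,P1); (AZ,SnB,P2)]);
 (5,21,[(AX,SB,P3); (AX,SnA,P2); (AZ,SI,P1); (AY,SI,P2)]);
 (5,22,[(AZ,SnB,P2); (AZ,SnA,P1); (AY,SB,P3); (AX,SB,P2)]);
 (5,23,[(AZ,SnB,P2); (AZ,SnA,P1); (AY,SB,P3); (AY,SnA,P2)]);
 (6,7,[(AZ,SA,P2); (AX,SB,P1); (AZ,SnI,P3); (AZ,SnB,P3); (AX,SA,P1)]);
 (6,8,[(AY,SnI,P1); (AX,SA,P3); (AZ,SnB,P2); (AY,SnA,P3)]);
 (6,9,[(AY,SnI,P1); (AX,SA,P3); (AZ,SnB,P2); (AY,SnA,P1)]);
 (6,10,[(AZ,SA,P3); (AY,SnI,P3); (AX,SA,P2); (AY,SB,P1); (AX,SB,P1)]);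
 (6,11,[(AZ,SA,P1); (AY,SnB,P1); (AZ,SI,P1); (AY,SnI,P3); (AX,SA,P2)]);
 (6,12,[(AY,SnI,P1); (AY,SA,P3); (AX,SnA,P3); (AZ,SI,P2); (AX,SA,P3)]);
 (6,13,[(AY,SnI,P1); (AY,SnA,P3); (AX,SA,P3); (AZ,SnB,P2)]);
 (6,14,[(AY,SnI,P1); (AX,SA,P3); (AZ,SnB,P2); (AZ,SnA,P3); (AX,SB,P3)]);
 (6,15,[(AZ,SA,P1); (AY,SnI,P3); (AY,SnB,P1); (AX,SB,P1); (AX,SA,P2)]);
 (6,16,[(AX,SnB,P3); (AX,SB,P2); (AZ,SI,P3); (AY,SI,P1)]);
 (6,17,[(AX,SB,P3); (AZ,SI,P1); (AY,SnI,P1); (AX,SA,P3)]);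
 (6,18,[(AY,SnI,P1); (AX,SA,P3); (AZ,SnB,P2)]);
 (6,19,[(AY,SnI,P1); (AX,SnA,P3); (AZ,SI,P2); (AX,SA,P3)]);
 (6,20,[(AX,SnB,P3); (AY,SnI,P3); (AX,SA,P2); (AZ,SI,P3)]);
 (6,21,[(AX,SnB,P1); (AZ,SnI,P1); (AY,SnI,P3); (AY,SnA,P2); (AX,SA,P2)]);
 (6,22,[(AY,SnI,P1); (AX,SA,P3); (AZ,SnB,P2); (AX,SB,P2)]);
 (6,23,[(AY,SnI,P1); (AX,SA,P3); (AZ,SnB,P2); (AY,SnA,P2)]);
 (7,8,[(AZ,SnB,P2); (AY,SnA,P3); (AZ,SnI,P1); (AY,SnI,P1); (AX,SA,P2)]);
 (7,9,[(AZ,SnB,P3); (AZ,SA,P1); (AY,SnB,P1); (AY,SnA,P1); (AX,SA,P1)]);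
 (7,10,[(AY,SnI,P1); (AX,SnI,P1); (AX,SA,P2); (AY,SB,P1); (AY,SnA,P1)]);
 (7,11,[(AZ,SA,P1); (AY,SnB,P1); (AZ,SI,P1); (AZ,SnB,P3); (AX,SA,P1)]);
 (7,12,[(AY,SA,P3); (AZ,SnI,P3); (AZ,SI,P2); (AY,SnI,P1); (AX,SA,P2)]);
 (7,13,[(AY,SnA,P3); (AZ,SnB,P3); (AZ,SA,P1); (AY,SnB,P1); (AX,SA,P1)]);
 (7,14,[(AY,SB,P3); (AY,SA,P1); (AZ,SI,P3); (AZ,SA,P2); (AY,SI,P1)]);
 (7,15,[(AZ,SnB,P3); (AZ,SA,P1); (AY,SnB,P1); (AX,SB,P1); (AX,SA,P1)]);
 (7,16,[(AY,SA,P1); (AZ,SI,P3); (AZ,SA,P2); (AY,SI,P1)]);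
 (7,17,[(AY,SnI,P3); (AZ,SnB,P2); (AY,SnA,P3); (AZ,SI,P1)]);
 (7,18,[(AZ,SnB,P3); (AZ,SA,P1); (AY,SnB,P1); (AX,SA,P1)]);
 (7,19,[(AZ,SI,P2); (AZ,SnB,P3); (AZ,SA,P1); (AY,SnB,P1); (AX,SA,P1)]);
 (7,20,[(AY,SnI,P1); (AY,SA,P1); (AX,SA,P2); (AZ,SI,P3)]);
 (7,21,[(AX,SnB,P1); (AZ,SnI,P1); (AZ,SnB,P3); (AY,SnA,P2); (AX,SA,P1)]);
 (7,22,[(AZ,SnB,P3); (AZ,SA,P1); (AY,SnB,P1); (AX,SB,P2); (AX,SA,P1)]);
 (7,23,[(AZ,SnB,P3); (AZ,SA,P1); (AY,SnB,P1); (AY,SnA,P2); (AX,SA,P1)]);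
 (8,9,[(AZ,SnB,P3); (AY,SB,P1); (AY,SnA,P1)]);
 (8,10,[(AZ,SB,P1); (AX,SnI,P1); (AY,SB,P1); (AY,SnA,P1); (AX,SA,P3)]);
 (8,11,[(AZ,SnB,P3); (AX,SnI,P3); (AY,SB,P1); (AY,SnA,P1)]);
 (8,12,[(AY,SA,P1); (AZ,SI,P3); (AZ,SB,P1); (AX,SB,P2); (AX,SA,P3)]);
 (8,13,[(AY,SnA,P1); (AZ,SI,P1); (AZ,SnB,P3); (AY,SnA,P2)]);
 (8,14,[(AY,SB,P3); (AY,SA,P1); (AZ,SI,P3); (AZ,SB,P1); (AX,SA,P3)]);
 (8,15,[(AY,SnB,P3); (AY,SnA,P1); (AZ,SI,P1); (AZ,SnB,P3)]);
 (8,16,[(AY,SA,P1); (AZ,SI,P3); (AZ,SB,P1); (AX,SA,P3)]);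
 (8,17,[(AY,SnA,P1); (AZ,SI,P1); (AZ,SnB,P3)]);
 (8,18,[(AZ,SnB,P3); (AX,SnI,P3); (AY,SB,P1)]);
 (8,19,[(AZ,SI,P2); (AZ,SnB,P3); (AX,SnI,P3); (AY,SB,P1)]);
 (8,20,[(AY,SnB,P2); (AY,SnA,P1); (AZ,SI,P1); (AZ,SnB,P3)]);
 (8,21,[(AY,SnA,P1); (AX,SnA,P2); (AZ,SI,P1); (AZ,SnB,P3)]);
 (8,22,[(AZ,SnB,P3); (AX,SnI,P3); (AY,SB,P1); (AX,SB,P2)]);
 (8,23,[(AY,SnA,P1); (AZ,SI,P1); (AZ,SnB,P3); (AY,SnA,P1)]);
 (9,10,[(AX,SnI,P1); (AZ,SnB,P3); (AY,SnB,P3); (AY,SnA,P1); (AX,SA,P1)]);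
 (9,11,[(AZ,SA,P2); (AY,SnB,P1); (AZ,SI,P1); (AZ,SB,P1); (AX,SA,P2)]);
 (9,12,[(AZ,SB,P1); (AY,SI,P1); (AX,SA,P2); (AY,SB,P1); (AX,SB,P1)]);
 (9,13,[(AY,SnA,P2); (AZ,SnB,P1); (AY,SB,P1); (AY,SnA,P1)]);
 (9,14,[(AY,SB,P1); (AZ,SnI,P1); (AY,SnA,P2); (AZ,SnB,P1)]);
 (9,15,[(AZ,SB,P1); (AX,SnI,P2); (AY,SnB,P3); (AZ,SI,P1); (AX,SA,P2)]);
 (9,16,[(AZ,SI,P3); (AZ,SB,P1); (AX,SA,P2); (AY,SB,P1)]);
 (9,17,[(AZ,SI,P1); (AZ,SB,P1); (AX,SA,P2); (AY,SB,P1)]);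
 (9,18,[(AZ,SB,P1); (AX,SA,P2); (AY,SB,P1)]);
 (9,19,[(AZ,SI,P2); (AZ,SB,P1); (AX,SA,P2); (AY,SB,P1)]);
 (9,20,[(AZ,SnI,P3); (AY,SnA,P2); (AZ,SnB,P1); (AY,SB,P1)]);
 (9,21,[(AZ,SnI,P1); (AY,SnA,P2); (AZ,SnB,P1); (AY,SB,P1)]);
 (9,22,[(AZ,SB,P1); (AX,SA,P2); (AY,SB,P1); (AX,SB,P2)]);
 (9,23,[(AY,SnA,P2); (AZ,SnB,P1); (AY,SB,P1)]);
 (10,11,[(AZ,SB,P3); (AZ,SnA,P1); (AY,SB,P1); (AX,SB,P3); (AX,SA,P3)]);
 (10,12,[(AY,SnB,P1); (AY,SA,P3); (AZ,SI,P2); (AZ,SA,P3); (AY,SI,P1)]);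
 (10,13,[(AX,SnI,P1); (AY,SnA,P3); (AZ,SnI,P1); (AZ,SnB,P3); (AX,SA,P1)]);
 (10,14,[(AX,SnI,P2); (AZ,SnA,P3); (AY,SI,P3); (AY,SB,P1); (AX,SB,P3)]);
 (10,15,[(AZ,SA,P1); (AY,SnI,P1); (AY,SnB,P3); (AX,SB,P1); (AX,SA,P2)]);
 (10,16,[(AZ,SI,P3); (AY,SB,P1); (AX,SA,P1); (AY,SnB,P3); (AX,SA,P2)]);
 (10,17,[(AX,SnI,P3); (AY,SnA,P1); (AZ,SI,P1); (AZ,SnB,P3)]);
 (10,18,[(AY,SB,P1); (AX,SA,P1); (AY,SnB,P3); (AX,SA,P2)]);
 (10,19,[(AY,SnB,P1); (AZ,SI,P2); (AZ,SA,P3); (AY,SI,P1)]);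
 (10,20,[(AY,SnB,P3); (AZ,SA,P1); (AY,SnI,P1); (AX,SB,P1); (AX,SA,P2)]);
 (10,21,[(AX,SnI,P2); (AY,SB,P1); (AX,SnI,P1); (AZ,SnB,P3); (AY,SnA,P1)]);
 (10,22,[(AY,SB,P1); (AX,SA,P1); (AY,SnB,P3); (AX,SB,P2); (AX,SA,P2)]);
 (10,23,[(AY,SB,P1); (AX,SA,P1); (AY,SnB,P3); (AY,SnA,P2); (AX,SA,P2)]);
 (11,12,[(AZ,SnB,P1); (AY,SnB,P3); (AY,SA,P1); (AX,SB,P2); (AX,SA,P1)]);
 (11,13,[(AZ,SB,P3); (AX,SA,P2); (AY,SnB,P3); (AY,SnA,P3); (AX,SA,P1)]);
 (11,14,[(AX,SI,P2); (AY,SnB,P3); (AZ,SI,P1); (AZ,SnB,P1); (AX,SA,P1)]);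
 (11,15,[(AY,SnB,P3); (AZ,SI,P1); (AZ,SB,P1); (AY,SI,P2); (AX,SA,P1)]);
 (11,16,[(AY,SA,P3); (AZ,SI,P3); (AZ,SnA,P3); (AY,SI,P3)]);
 (11,17,[(AZ,SI,P1); (AZ,SB,P3); (AX,SA,P2); (AY,SnB,P3); (AX,SA,P1)]);
 (11,18,[(AZ,SB,P3); (AX,SA,P2); (AY,SnB,P3); (AX,SA,P1)]);
 (11,19,[(AY,SnB,P1); (AZ,SI,P2); (AZ,SB,P3); (AX,SA,P3)]);
 (11,20,[(AZ,SB,P3); (AX,SA,P2); (AZ,SI,P3); (AY,SnB,P3); (AX,SA,P1)]);
 (11,21,[(AX,SI,P3); (AY,SB,P3); (AZ,SnA,P3); (AY,SI,P3); (AX,SB,P3)]);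
 (11,22,[(AZ,SB,P3); (AX,SA,P2); (AY,SnB,P3); (AX,SB,P2); (AX,SA,P1)]);
 (11,23,[(AZ,SB,P3); (AX,SA,P2); (AY,SnB,P3); (AY,SnA,P2); (AX,SA,P1)]);
 (12,13,[(AZ,SB,P3); (AX,SA,P2); (AY,SB,P3); (AY,SnA,P3)]);
 (12,14,[(AZ,SB,P3); (AX,SI,P3); (AY,SnB,P1); (AY,SnA,P3); (AX,SA,P2)]);
 (12,15,[(AZ,SnB,P1); (AX,SI,P1); (AY,SnB,P1); (AY,SnA,P3); (AX,SA,P1)]);
 (12,16,[(AX,SI,P2); (AY,SA,P3); (AZ,SI,P3); (AZ,SnB,P1)]);
 (12,17,[(AY,SnA,P3); (AZ,SI,P1); (AZ,SB,P1); (AY,SI,P2)]);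
 (12,18,[(AZ,SnB,P1); (AX,SI,P1); (AY,SnB,P1); (AX,SA,P1)]);
 (12,19,[(AZ,SI,P2); (AZ,SnB,P1); (AX,SI,P1); (AY,SnB,P1); (AX,SA,P1)]);
 (12,20,[(AY,SA,P1); (AZ,SnI,P3); (AZ,SnB,P1); (AY,SnA,P2); (AX,SA,P1)]);
 (12,21,[(AY,SA,P1); (AZ,SnI,P3); (AZ,SnB,P1); (AX,SB,P2); (AX,SA,P1)]);
 (12,22,[(AY,SA,P2); (AZ,SnB,P3); (AX,SnA,P3); (AZ,SI,P2)]);
 (12,23,[(AY,SnA,P2); (AZ,SB,P1); (AX,SA,P3); (AY,SI,P2)]);
 (13,14,[(AZ,SnB,P1); (AX,SI,P2); (AZ,SA,P1); (AY,SB,P3); (AX,SB,P1)]);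
 (13,15,[(AZ,SnB,P1); (AZ,SA,P1); (AY,SB,P3); (AX,SB,P1)]);
 (13,16,[(AZ,SI,P3); (AZ,SnB,P1); (AY,SB,P3)]);
 (13,17,[(AZ,SI,P1); (AZ,SnB,P1); (AY,SB,P3)]);
 (13,18,[(AZ,SnB,P1); (AY,SB,P3)]);
 (13,19,[(AZ,SI,P2); (AZ,SnB,P1); (AY,SB,P3)]);
 (13,20,[(AZ,SnI,P1); (AZ,SnB,P1); (AY,SB,P3); (AX,SB,P2)]);
 (13,21,[(AZ,SnI,P3); (AZ,SnB,P1); (AY,SB,P3); (AX,SB,P2)]);
 (13,22,[(AZ,SnB,P1); (AY,SB,P3); (AX,SB,P2)]);
 (13,23,[(AZ,SnB,P1); (AY,SB,P3); (AY,SnA,P2)]);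
 (14,15,[(AZ,SnA,P1); (AY,SI,P3); (AZ,SA,P1); (AX,SB,P1)]);
 (14,16,[(AX,SI,P3); (AY,SA,P3); (AZ,SI,P3); (AZ,SnB,P1)]);
 (14,17,[(AY,SnB,P1); (AX,SI,P1); (AZ,SB,P3); (AY,SnA,P3); (AX,SA,P2)]);
 (14,18,[(AY,SB,P3); (AX,SA,P1); (AY,SnB,P1); (AX,SA,P2)]);
 (14,19,[(AY,SnB,P3); (AZ,SI,P2); (AZ,SnA,P1); (AY,SI,P3)]);
 (14,20,[(AY,SnB,P1); (AZ,SnA,P1); (AX,SA,P2); (AY,SI,P3); (AX,SB,P3)]);
 (14,21,[(AY,SB,P3); (AX,SI,P3); (AZ,SB,P3); (AY,SnA,P3); (AX,SA,P3)]);
 (14,22,[(AY,SB,P3); (AX,SA,P1); (AY,SnB,P1); (AX,SB,P2); (AX,SA,P2)]);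
 (14,23,[(AY,SB,P3); (AX,SA,P1); (AY,SnB,P1); (AY,SnA,P2); (AX,SA,P2)]);
 (15,16,[(AX,SnA,P3); (AZ,SI,P3); (AY,SI,P2); (AY,SnB,P1); (AX,SA,P1)]);
 (15,17,[(AX,SA,P3); (AZ,SI,P1); (AY,SnB,P1); (AX,SA,P1)]);
 (15,18,[(AZ,SA,P1); (AY,SI,P1)]);
 (15,19,[(AX,SA,P3); (AZ,SI,P2); (AY,SnB,P1); (AX,SA,P1)]);
 (15,20,[(AZ,SnI,P1); (AZ,SA,P1); (AY,SI,P1); (AX,SB,P2)]);
 (15,21,[(AZ,SA,P1); (AX,SnA,P1); (AY,SI,P1); (AX,SB,P1)]);
 (15,22,[(AZ,SA,P1); (AY,SI,P1); (AX,SB,P2)]);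
 (15,23,[(AZ,SA,P1); (AY,SI,P1); (AY,SnA,P2)]);
 (16,17,[(AX,SA,P3); (AZ,SI,P1)]);
 (16,18,[(AX,SA,P1); (AY,SnB,P2); (AX,SA,P2)]);
 (16,19,[(AX,SA,P3); (AZ,SI,P2)]);
 (16,20,[(AZ,SnI,P1); (AX,SA,P3); (AZ,SI,P2); (AX,SB,P2)]);
 (16,21,[(AZ,SnI,P3); (AX,SA,P3); (AZ,SI,P2); (AX,SB,P2)]);
 (16,22,[(AX,SA,P3); (AZ,SI,P2); (AX,SB,P2)]);
 (16,23,[(AX,SA,P3); (AZ,SI,P2); (AY,SnA,P2)]);
 (17,18,[(AX,SnB,P3); (AY,SI,P3); (AY,SnB,P2); (AX,SA,P1)]);
 (17,19,[(AZ,SI,P2); (AX,SnB,P1); (AY,SnI,P1); (AX,SA,P3)]);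
 (17,20,[(AY,SnB,P2); (AX,SA,P1); (AZ,SI,P1)]);
 (17,21,[(AX,SnA,P2); (AZ,SI,P1); (AX,SnA,P1); (AY,SI,P2)]);
 (17,22,[(AX,SnA,P3); (AZ,SI,P1); (AY,SI,P2); (AX,SB,P2)]);
 (17,23,[(AZ,SI,P1); (AY,SnA,P1); (AZ,SnB,P1); (AY,SnA,P1)]);
 (18,19,[(AZ,SI,P2); (AX,SnB,P1); (AY,SnI,P1); (AX,SA,P2)]);
 (18,20,[(AX,SB,P3); (AX,SA,P2); (AZ,SI,P3); (AY,SI,P1)]);
 (18,21,[(AY,SB,P2); (AX,SB,P3); (AZ,SI,P3); (AY,SI,P1)]);
 (18,22,[(AZ,SI,P3); (AX,SnA,P3); (AY,SI,P2); (AX,SB,P2)]);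
 (18,23,[(AY,SnA,P1); (AZ,SI,P3); (AZ,SnB,P1); (AY,SnA,P1)]);
 (19,20,[(AX,SA,P2); (AZ,SI,P3); (AX,SA,P3); (AY,SB,P2)]);
 (19,21,[(AX,SA,P3); (AY,SB,P2); (AZ,SI,P3); (AX,SA,P3)]);
 (19,22,[(AX,SnB,P1); (AY,SnI,P1); (AX,SB,P2); (AX,SA,P2)]);
 (19,23,[(AY,SA,P1); (AZ,SB,P3); (AY,SnA,P2); (AX,SA,P2)]);
 (20,21,[(AX,SA,P3); (AZ,SnI,P3); (AX,SB,P2); (AX,SA,P2)]);
 (20,22,[(AX,SA,P1); (AY,SB,P2); (AX,SB,P2)]);
 (20,23,[(AX,SA,P1); (AY,SB,P2); (AY,SnA,P2)]);
 (21,22,[(AZ,SnI,P2); (AX,SB,P1); (AY,SI,P1); (AY,SnA,P2); (AX,SA,P1)]);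
 (21,23,[(AX,SB,P1); (AZ,SnI,P2); (AY,SI,P1); (AX,SB,P2); (AX,SA,P1)])].
Definition P_Gen : list (list (axis*sym)) := [[(AX,SA); (AX,SA); (AX,SA)]; [(AX,SA); (AZ,SB); (AZ,SB)]; [(AX,SA); (AX,SA); (AZ,SnI); (AX,SB)]; [(AY,SB); (AZ,SnA)]; [(AX,SA)]; [(AX,SA); (AY,SnI); (AY,SnI)]; [(AX,SA); (AY,SnI)]; [(AZ,SI); (AX,SnB)]; [(AX,SA); (AX,SA); (AX,SA); (AZ,SnB)]; [(AX,SA); (AZ,SB); (AZ,SB); (AZ,SB)]; [(AY,SB); (AY,SB); (AY,SB)]; [(AX,SA); (AX,SA); (AY,SnB)]; [(AX,SA); (AZ,SB)]; [(AX,SA); (AY,SnI); (AY,SnI); (AZ,SnB)]; [(AY,SB)]; [(AX,SA); (AZ,SB); (AX,SI)]; []; [(AZ,SI); (AZ,SI)]; [(AZ,SI); (AZ,SI); (AZ,SI)]; [(AZ,SI)]; [(AX,SA); (AX,SA)]; [(AY,SB); (AY,SB)]; [(AX,SA); (AX,SA); (AZ,SnI)]; [(AY,SB); (AY,SB); (AZ,SnI)]].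
Definition S_Zer : list mpt := [MP (Sy SA) (Sy SI) (Sy SB); MP (Sy SnA) (Sy SI) (Sy SB); MP (Sy SB) (Sy SI) (Sy SA); MP (Sy SB) (Sy SI) (Sy SnA); MP (Sy SA) (Sy SnI) (Sy SB); MP (Sy SnA) (Sy SnI) (Sy SB); MP (Sy SB) (Sy SnI) (Sy SA); MP (Sy SB) (Sy SnI) (Sy SnA); MP (Sy SnI) (Sy SA) (Sy SB); MP (Sy SnI) (Sy SnA) (Sy SB); MP (Sy SnI) (Sy SB) (Sy SA); MP (Sy SnI) (Sy SB) (Sy SnA); MP (Sy SI) (Sy SA) (Sy SB); MP (Sy SI) (Sy SnA) (Sy SB); MP (Sy SI) (Sy SB) (Sy SA); MP (Sy SI) (Sy SB) (Sy SnA); MP (Sy SA) (Sy SB) (Sy SI); MP (Sy SnA) (Sy SB) (Sy SI); MP (Sy SB) (Sy SA) (Sy SI); MP (Sy SB) (Sy SnA) (Sy SI); MP (Sy SA) (Sy SB) (Sy SnI); MP (Sy SnA) (Sy SB) (Sy SnI); MP (Sy SB) (Sy SA) (Sy SnI); MP (Sy SB) (Sy SnA) (Sy SnI)].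
Definition X_Zer : list (nat*nat*list mtw) := [(0,1,[(AX,SB,P1); (AX,SnA,P1); (AZ,SI,P1)]);
 (0,2,[(AX,SnA,P3); (AY,SB,P2); (AX,SB,P1)]);
 (0,3,[(AX,SB,P1); (AX,SnA,P1); (AZ,SI,P2)]);
 (0,4,[(AX,SA,P3); (AZ,SI,P3); (AY,SI,P2); (AX,SA,P1)]);
 (0,5,[(AX,SnA,P3); (AZ,SI,P1); (AY,SB,P2)]);
 (0,6,[(AX,SB,P3); (AX,SnA,P1); (AZ,SI,P2)]);
 (0,7,[(AX,SnA,P3); (AY,SB,P2); (AX,SB,P3)]);
 (0,8,[(AY,SA,P1); (AX,SnA,P1); (AZ,SI,P2)]);
 (0,9,[(AX,SnA,P3); (AY,SB,P2); (AY,SnA,P1)]);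
 (0,10,[(AZ,SA,P3); (AX,SnA,P3); (AY,SB,P2); (AX,SB,P1)]);
 (0,11,[(AX,SnA,P3); (AY,SB,P2); (AZ,SA,P1); (AX,SB,P1)]);
 (0,12,[(AY,SA,P3); (AX,SnA,P1); (AZ,SI,P2)]);
 (0,13,[(AX,SnA,P3); (AY,SB,P2); (AY,SnA,P3)]);
 (0,14,[(AZ,SA,P1); (AX,SnA,P3); (AY,SB,P2); (AX,SB,P1)]);
 (0,15,[(AX,SnA,P3); (AY,SB,P2); (AZ,SA,P3); (AX,SB,P1)]);
 (0,16,[(AZ,SI,P3); (AX,SnA,P3); (AY,SB,P2)]);
 (0,17,[(AZ,SI,P1); (AX,SnA,P3); (AY,SB,P2)]);
 (0,18,[(AX,SnA,P1); (AZ,SI,P2)]);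
 (0,19,[(AX,SnA,P3); (AY,SB,P2)]);
 (0,20,[(AZ,SnI,P1); (AX,SnA,P3); (AY,SB,P2); (AX,SB,P2)]);
 (0,21,[(AZ,SnI,P3); (AX,SnA,P3); (AY,SB,P2); (AX,SB,P2)]);
 (0,22,[(AX,SnA,P3); (AY,SB,P2); (AX,SB,P2)]);
 (0,23,[(AX,SnA,P3); (AY,SB,P2); (AY,SnA,P2)]);
 (1,2,[(AZ,SnA,P3); (AX,SB,P1); (AY,SI,P2); (AY,SB,P3)]);
 (1,3,[(AZ,SA,P1); (AY,SI,P2); (AY,SB,P1); (AX,SB,P1)]);
 (1,4,[(AX,SA,P3); (AY,SI,P2); (AX,SB,P1); (AZ,SI,P3)]);
 (1,5,[(AX,SB,P1); (AY,SI,P2); (AX,SnA,P3); (AZ,SI,P1)]);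
 (1,6,[(AX,SB,P1); (AZ,SI,P1); (AY,SI,P2); (AY,SnA,P2)]);
 (1,7,[(AY,SI,P1); (AX,SB,P3); (AZ,SnI,P3); (AX,SA,P1)]);
 (1,8,[(AZ,SB,P2); (AX,SA,P1); (AY,SI,P1); (AY,SnA,P3); (AX,SA,P1)]);
 (1,9,[(AZ,SA,P1); (AY,SI,P2); (AY,SB,P1); (AY,SnA,P1)]);
 (1,10,[(AY,SI,P2); (AY,SB,P1); (AX,SB,P1); (AZ,SI,P3)]);
 (1,11,[(AY,SB,P1); (AX,SB,P1); (AZ,SI,P1); (AY,SI,P2)]);
 (1,12,[(AZ,SB,P2); (AX,SA,P1); (AY,SI,P1); (AY,SnA,P1); (AX,SA,P1)]);
 (1,13,[(AZ,SA,P1); (AY,SI,P2); (AY,SB,P1); (AY,SnA,P3)]);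
 (1,14,[(AZ,SA,P1); (AX,SB,P1); (AY,SI,P2); (AY,SB,P1)]);
 (1,15,[(AY,SI,P2); (AZ,SnA,P3); (AY,SB,P3); (AX,SB,P3)]);
 (1,16,[(AY,SI,P2); (AX,SB,P1); (AZ,SI,P3)]);
 (1,17,[(AX,SB,P1); (AZ,SI,P1); (AY,SI,P2)]);
 (1,18,[(AZ,SI,P2); (AZ,SA,P1); (AY,SI,P2); (AY,SB,P1)]);
 (1,19,[(AZ,SA,P1); (AY,SI,P2); (AY,SB,P1)]);
 (1,20,[(AY,SB,P2); (AX,SB,P1); (AZ,SI,P1); (AY,SI,P2)]);
 (1,21,[(AX,SB,P1); (AX,SnA,P2); (AZ,SI,P1); (AZ,SB,P2)]);
 (1,22,[(AY,SI,P2); (AX,SB,P1); (AZ,SI,P3); (AX,SB,P1)]);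
 (1,23,[(AX,SB,P1); (AZ,SI,P1); (AY,SI,P2); (AX,SB,P1)]);
 (2,3,[(AZ,SnA,P2); (AX,SA,P3); (AY,SI,P1); (AX,SB,P3)]);
 (2,4,[(AY,SI,P1); (AX,SA,P3); (AZ,SI,P3); (AY,SI,P2); (AX,SA,P1)]);
 (2,5,[(AY,SI,P1); (AX,SnA,P3); (AZ,SI,P1); (AY,SB,P2)]);
 (2,6,[(AY,SI,P1); (AX,SB,P3); (AX,SnA,P1); (AZ,SI,P2)]);
 (2,7,[(AY,SI,P1); (AX,SnA,P3); (AY,SB,P2); (AX,SB,P3)]);
 (2,8,[(AY,SI,P1); (AY,SA,P1); (AX,SnA,P1); (AZ,SI,P2)]);
 (2,9,[(AY,SI,P1); (AX,SnA,P3); (AY,SB,P2); (AY,SnA,P1)]);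
 (2,10,[(AY,SI,P1); (AZ,SA,P3); (AX,SnA,P3); (AY,SB,P2); (AX,SB,P1)]);
 (2,11,[(AZ,SA,P3); (AY,SB,P1); (AZ,SI,P1); (AY,SI,P3); (AX,SA,P1)]);
 (2,12,[(AY,SI,P1); (AY,SA,P3); (AX,SnA,P1); (AZ,SI,P2)]);
 (2,13,[(AY,SI,P1); (AX,SnA,P3); (AY,SB,P2); (AY,SnA,P3)]);
 (2,14,[(AY,SI,P1); (AZ,SA,P1); (AX,SnA,P3); (AY,SB,P2); (AX,SB,P1)]);
 (2,15,[(AZ,SnA,P3); (AY,SI,P1); (AY,SB,P3); (AX,SB,P3)]);
 (2,16,[(AZ,SI,P3); (AY,SI,P1); (AX,SnA,P3); (AY,SB,P2)]);
 (2,17,[(AZ,SI,P1); (AY,SI,P1); (AX,SnA,P3); (AY,SB,P2)]);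
 (2,18,[(AY,SI,P1); (AX,SnA,P1); (AZ,SI,P2)]);
 (2,19,[(AY,SI,P1); (AX,SnA,P3); (AY,SB,P2)]);
 (2,20,[(AY,SI,P3); (AX,SnA,P1); (AY,SB,P2); (AZ,SI,P1); (AX,SA,P1)]);
 (2,21,[(AX,SnA,P1); (AY,SI,P1); (AX,SnA,P3); (AY,SB,P2); (AX,SB,P1)]);
 (2,22,[(AY,SI,P1); (AX,SnA,P3); (AY,SB,P2); (AX,SB,P2)]);
 (2,23,[(AY,SI,P1); (AX,SnA,P3); (AY,SB,P2); (AY,SnA,P2)]);
 (3,4,[(AY,SI,P3); (AX,SA,P3); (AZ,SI,P3); (AZ,SB,P2); (AX,SA,P1)]);
 (3,5,[(AX,SA,P3); (AZ,SB,P2); (AY,SI,P3); (AX,SB,P1)]);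
 (3,6,[(AX,SB,P1); (AZ,SI,P3); (AY,SnA,P2); (AX,SA,P3)]);
 (3,7,[(AX,SA,P3); (AY,SI,P3); (AX,SB,P3)]);
 (3,8,[(AX,SA,P3); (AZ,SB,P3); (AY,SI,P3); (AX,SB,P1)]);
 (3,9,[(AX,SA,P3); (AY,SI,P3); (AY,SnA,P1)]);
 (3,10,[(AY,SB,P1); (AX,SB,P1); (AZ,SI,P3); (AX,SA,P3)]);
 (3,11,[(AX,SA,P3); (AY,SI,P3); (AZ,SnA,P1); (AX,SB,P3)]);
 (3,12,[(AX,SA,P3); (AY,SI,P3); (AY,SA,P1); (AX,SB,P2)]);
 (3,13,[(AX,SA,P3); (AY,SI,P3); (AY,SnA,P3)]);
 (3,14,[(AX,SA,P3); (AY,SI,P3); (AZ,SA,P1); (AX,SB,P1)]);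
 (3,15,[(AZ,SnA,P3); (AY,SB,P3); (AX,SB,P3); (AX,SA,P3)]);
 (3,16,[(AX,SB,P1); (AZ,SI,P3); (AX,SA,P3)]);
 (3,17,[(AZ,SI,P1); (AX,SA,P3); (AY,SI,P3)]);
 (3,18,[(AZ,SI,P2); (AX,SA,P3); (AY,SI,P3)]);
 (3,19,[(AX,SA,P3); (AY,SI,P3)]);
 (3,20,[(AZ,SnI,P1); (AX,SA,P3); (AY,SI,P3); (AX,SB,P2)]);
 (3,21,[(AY,SB,P2); (AX,SB,P1); (AZ,SI,P3); (AX,SA,P3)]);
 (3,22,[(AX,SA,P3); (AY,SI,P3); (AX,SB,P2)]);
 (3,23,[(AX,SA,P3); (AY,SI,P3); (AY,SnA,P2)]);
 (4,5,[(AX,SA,P1); (AY,SnI,P3); (AZ,SB,P2); (AX,SB,P3); (AX,SA,P1)]);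
 (4,6,[(AX,SA,P3); (AY,SnI,P2); (AX,SB,P3); (AX,SA,P3)]);
 (4,7,[(AX,SA,P1); (AZ,SB,P2); (AX,SB,P3); (AX,SA,P1)]);
 (4,8,[(AX,SA,P1); (AZ,SB,P2); (AY,SnA,P3); (AX,SA,P1)]);
 (4,9,[(AY,SnA,P1); (AX,SA,P1); (AZ,SB,P2); (AX,SA,P1)]);
 (4,10,[(AX,SA,P1); (AZ,SB,P2); (AZ,SA,P3); (AX,SB,P1); (AX,SA,P1)]);
 (4,11,[(AX,SA,P1); (AZ,SB,P2); (AZ,SnA,P1); (AX,SB,P3); (AX,SA,P1)]);
 (4,12,[(AX,SA,P1); (AZ,SB,P2); (AY,SnA,P1); (AX,SA,P1)]);
 (4,13,[(AY,SnA,P3); (AX,SA,P1); (AZ,SB,P2); (AX,SA,P1)]);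
 (4,14,[(AX,SA,P1); (AZ,SB,P2); (AZ,SA,P1); (AX,SB,P1); (AX,SA,P1)]);
 (4,15,[(AX,SA,P1); (AZ,SB,P2); (AZ,SnA,P3); (AX,SB,P3); (AX,SA,P1)]);
 (4,16,[(AZ,SI,P3); (AX,SA,P1); (AZ,SB,P2); (AX,SA,P1)]);
 (4,17,[(AZ,SI,P1); (AX,SA,P1); (AZ,SB,P2); (AX,SA,P1)]);
 (4,18,[(AX,SnA,P3); (AX,SA,P2); (AZ,SI,P2)]);
 (4,19,[(AX,SA,P1); (AZ,SB,P2); (AX,SA,P1)]);
 (4,20,[(AX,SnA,P3); (AY,SB,P2); (AZ,SI,P1); (AX,SA,P2)]);
 (4,21,[(AZ,SnI,P3); (AX,SA,P1); (AZ,SB,P2); (AX,SB,P2); (AX,SA,P1)]);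
 (4,22,[(AX,SA,P1); (AZ,SB,P2); (AX,SB,P2); (AX,SA,P1)]);
 (4,23,[(AX,SA,P1); (AZ,SB,P2); (AY,SnA,P2); (AX,SA,P1)]);
 (5,6,[(AY,SnI,P2); (AZ,SA,P1); (AY,SB,P1); (AX,SB,P3); (AX,SA,P2)]);
 (5,7,[(AZ,SB,P2); (AZ,SA,P3); (AY,SB,P1); (AX,SB,P3)]);
 (5,8,[(AZ,SB,P2); (AZ,SA,P3); (AY,SB,P1); (AY,SnA,P3)]);
 (5,9,[(AY,SnA,P1); (AZ,SB,P2); (AZ,SA,P3); (AY,SB,P1)]);
 (5,10,[(AZ,SB,P2); (AZ,SA,P3); (AY,SB,P1); (AX,SB,P1)]);
 (5,11,[(AZ,SA,P1); (AY,SB,P1); (AZ,SI,P1); (AY,SnI,P2); (AX,SA,P2)]);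
 (5,12,[(AZ,SB,P2); (AZ,SA,P3); (AY,SB,P1); (AY,SnA,P1)]);
 (5,13,[(AY,SnA,P3); (AZ,SB,P2); (AZ,SA,P3); (AY,SB,P1)]);
 (5,14,[(AZ,SA,P1); (AY,SnI,P2); (AY,SB,P1); (AX,SB,P1); (AX,SA,P2)]);
 (5,15,[(AY,SB,P3); (AX,SB,P3); (AZ,SI,P3); (AZ,SB,P2)]);
 (5,16,[(AX,SB,P3); (AZ,SI,P3); (AZ,SB,P2)]);
 (5,17,[(AZ,SI,P1); (AZ,SB,P2); (AZ,SA,P3); (AY,SB,P1)]);
 (5,18,[(AX,SnA,P3); (AZ,SI,P2); (AY,SnI,P1); (AX,SA,P3)]);
 (5,19,[(AZ,SB,P2); (AZ,SA,P3); (AY,SB,P1)]);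
 (5,20,[(AX,SB,P3); (AX,SA,P2); (AZ,SI,P3); (AZ,SB,P2)]);
 (5,21,[(AY,SB,P2); (AX,SB,P3); (AZ,SI,P3); (AZ,SB,P2)]);
 (5,22,[(AZ,SB,P2); (AZ,SA,P3); (AY,SB,P1); (AX,SB,P2)]);
 (5,23,[(AZ,SB,P2); (AZ,SA,P3); (AY,SB,P1); (AY,SnA,P2)]);
 (6,7,[(AZ,SB,P3); (AZ,SA,P1); (AY,SB,P1); (AX,SB,P3); (AX,SA,P1)]);
 (6,8,[(AY,SnI,P3); (AX,SA,P3); (AZ,SB,P2); (AY,SnA,P3)]);
 (6,9,[(AY,SnI,P3); (AY,SnA,P1); (AX,SA,P3); (AZ,SB,P2)]);
 (6,10,[(AZ,SA,P3); (AY,SnI,P3); (AY,SB,P1); (AX,SB,P1); (AX,SA,P3)]);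
 (6,11,[(AZ,SnA,P1); (AZ,SA,P2); (AY,SI,P1); (AY,SB,P3); (AX,SB,P3)]);
 (6,12,[(AY,SnI,P3); (AX,SA,P3); (AZ,SB,P2); (AY,SnA,P1)]);
 (6,13,[(AY,SnI,P3); (AY,SnA,P3); (AX,SA,P3); (AZ,SB,P2)]);
 (6,14,[(AZ,SnA,P3); (AY,SB,P3); (AZ,SI,P1); (AY,SnI,P1); (AX,SA,P2)]);
 (6,15,[(AY,SnI,P3); (AX,SA,P3); (AZ,SB,P2); (AZ,SnA,P3); (AX,SB,P3)]);
 (6,16,[(AZ,SI,P3); (AY,SnI,P3); (AX,SA,P3); (AZ,SB,P2)]);
 (6,17,[(AX,SB,P3); (AZ,SI,P1); (AX,SnA,P3); (AY,SI,P2)]);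
 (6,18,[(AY,SnI,P3); (AX,SnA,P3); (AZ,SI,P2); (AX,SA,P3)]);
 (6,19,[(AY,SnI,P3); (AX,SA,P3); (AZ,SB,P2)]);
 (6,20,[(AY,SnI,P1); (AX,SnA,P3); (AY,SB,P2); (AZ,SI,P1); (AX,SA,P2)]);
 (6,21,[(AZ,SnI,P3); (AY,SnI,P3); (AX,SA,P3); (AZ,SB,P2); (AX,SB,P2)]);
 (6,22,[(AY,SnI,P3); (AX,SA,P3); (AZ,SB,P2); (AX,SB,P2)]);
 (6,23,[(AY,SnI,P3); (AX,SA,P3); (AZ,SB,P2); (AY,SnA,P2)]);
 (7,8,[(AZ,SB,P1); (AX,SA,P1); (AY,SnI,P3); (AX,SB,P3); (AX,SA,P2)]);
 (7,9,[(AY,SnA,P1); (AZ,SB,P3); (AZ,SnA,P3); (AY,SB,P3); (AX,SA,P1)]);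
 (7,10,[(AZ,SA,P3); (AX,SB,P1); (AZ,SnI,P3); (AZ,SB,P3); (AX,SA,P1)]);
 (7,11,[(AY,SnI,P3); (AX,SnI,P3); (AY,SB,P3); (AY,SnA,P1); (AX,SA,P2)]);
 (7,12,[(AY,SA,P1); (AZ,SI,P3); (AX,SB,P2); (AY,SI,P1)]);
 (7,13,[(AY,SnA,P3); (AZ,SB,P3); (AZ,SnA,P3); (AY,SB,P3); (AX,SA,P1)]);
 (7,14,[(AZ,SnA,P3); (AY,SB,P3); (AZ,SI,P1); (AZ,SB,P3); (AX,SA,P1)]);
 (7,15,[(AZ,SB,P3); (AZ,SnA,P3); (AY,SB,P3); (AX,SB,P3); (AX,SA,P1)]);
 (7,16,[(AX,SB,P2); (AY,SA,P1); (AZ,SI,P3); (AY,SI,P1)]);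
 (7,17,[(AY,SA,P3); (AX,SB,P2); (AZ,SI,P1); (AY,SI,P1)]);
 (7,18,[(AZ,SI,P2); (AZ,SB,P3); (AZ,SnA,P3); (AY,SB,P3); (AX,SA,P1)]);
 (7,19,[(AZ,SB,P3); (AZ,SnA,P3); (AY,SB,P3); (AX,SA,P1)]);
 (7,20,[(AY,SnI,P3); (AY,SA,P1); (AX,SA,P2); (AZ,SI,P3)]);
 (7,21,[(AX,SB,P1); (AZ,SnI,P3); (AZ,SB,P3); (AX,SB,P2); (AX,SA,P1)]);
 (7,22,[(AX,SB,P2); (AY,SI,P1); (AX,SnI,P1); (AY,SB,P1)]);
 (7,23,[(AZ,SB,P3); (AZ,SnA,P3); (AY,SB,P3); (AY,SnA,P2); (AX,SA,P1)]);
 (8,9,[(AY,SnA,P1); (AZ,SB,P3); (AY,SB,P1)]);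
 (8,10,[(AY,SB,P1); (AY,SA,P1); (AZ,SI,P3); (AZ,SB,P1); (AX,SA,P3)]);
 (8,11,[(AY,SB,P1); (AY,SnA,P1); (AZ,SI,P1); (AZ,SB,P3)]);
 (8,12,[(AZ,SB,P3); (AX,SA,P3); (AZ,SI,P3); (AY,SI,P2); (AX,SA,P1)]);
 (8,13,[(AY,SnA,P1); (AZ,SI,P1); (AZ,SB,P3); (AY,SnA,P2)]);
 (8,14,[(AY,SB,P3); (AY,SnA,P1); (AZ,SI,P1); (AZ,SB,P3)]);
 (8,15,[(AY,SB,P3); (AY,SA,P1); (AZ,SI,P3); (AZ,SB,P1); (AX,SA,P3)]);
 (8,16,[(AY,SA,P1); (AZ,SI,P3); (AZ,SB,P1); (AX,SA,P3)]);
 (8,17,[(AY,SnA,P1); (AZ,SI,P1); (AZ,SB,P3)]);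
 (8,18,[(AZ,SB,P3); (AX,SnA,P1); (AZ,SI,P2)]);
 (8,19,[(AZ,SB,P3); (AX,SnA,P3); (AY,SB,P2)]);
 (8,20,[(AY,SB,P2); (AY,SnA,P1); (AZ,SI,P1); (AZ,SB,P3)]);
 (8,21,[(AY,SnA,P1); (AX,SnA,P2); (AZ,SI,P1); (AZ,SB,P3)]);
 (8,22,[(AZ,SB,P3); (AX,SnA,P3); (AY,SB,P2); (AX,SB,P2)]);
 (8,23,[(AZ,SB,P3); (AX,SnA,P3); (AY,SB,P2); (AY,SnA,P2)]);
 (9,10,[(AX,SnI,P1); (AY,SnA,P1); (AZ,SB,P3); (AY,SB,P3); (AX,SA,P1)]);
 (9,11,[(AY,SB,P1); (AX,SA,P2); (AZ,SI,P1); (AZ,SB,P1); (AX,SA,P2)]);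
 (9,12,[(AZ,SB,P1); (AY,SI,P1); (AX,SA,P2); (AY,SB,P1); (AX,SB,P1)]);
 (9,13,[(AY,SnA,P3); (AZ,SnI,P1); (AX,SA,P1); (AY,SB,P1)]);
 (9,14,[(AY,SB,P1); (AZ,SnI,P3); (AY,SnA,P2); (AZ,SB,P1)]);
 (9,15,[(AY,SB,P1); (AZ,SnI,P1); (AY,SnA,P2); (AZ,SB,P1)]);
 (9,16,[(AZ,SI,P3); (AZ,SB,P1); (AX,SA,P2); (AY,SB,P1)]);
 (9,17,[(AZ,SI,P1); (AZ,SB,P1); (AX,SA,P2); (AY,SB,P1)]);
 (9,18,[(AZ,SI,P2); (AZ,SB,P1); (AX,SA,P2); (AY,SB,P1)]);
 (9,19,[(AZ,SB,P1); (AX,SA,P2); (AY,SB,P1)]);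
 (9,20,[(AZ,SnI,P3); (AY,SnA,P2); (AZ,SB,P1); (AY,SB,P1)]);
 (9,21,[(AZ,SnI,P1); (AY,SnA,P2); (AZ,SB,P1); (AY,SB,P1)]);
 (9,22,[(AZ,SB,P1); (AX,SA,P2); (AY,SB,P1); (AX,SB,P2)]);
 (9,23,[(AY,SnA,P2); (AZ,SB,P1); (AY,SB,P1)]);
 (10,11,[(AZ,SB,P3); (AY,SB,P1); (AX,SA,P2); (AZ,SI,P1); (AX,SA,P1)]);
 (10,12,[(AY,SB,P1); (AY,SA,P3); (AX,SA,P3); (AZ,SI,P2)]);
 (10,13,[(AY,SB,P1); (AX,SA,P3); (AZ,SI,P2); (AY,SnA,P3)]);
 (10,14,[(AY,SB,P3); (AX,SA,P1); (AZ,SnI,P2); (AZ,SI,P1); (AX,SA,P1)]);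
 (10,15,[(AY,SB,P3); (AZ,SI,P3); (AX,SA,P1); (AZ,SnI,P2); (AX,SA,P1)]);
 (10,16,[(AZ,SI,P1); (AY,SB,P1); (AX,SA,P3); (AZ,SI,P2)]);
 (10,17,[(AX,SnI,P3); (AY,SnA,P1); (AZ,SI,P1); (AZ,SB,P3)]);
 (10,18,[(AY,SB,P1); (AX,SA,P3); (AZ,SI,P2)]);
 (10,19,[(AY,SB,P3); (AX,SA,P1); (AZ,SnI,P2); (AX,SA,P1)]);
 (10,20,[(AZ,SnI,P1); (AY,SB,P1); (AX,SA,P3); (AZ,SI,P2); (AX,SB,P2)]);
 (10,21,[(AY,SB,P1); (AX,SA,P3); (AZ,SI,P2); (AZ,SA,P3); (AX,SB,P1)]);
 (10,22,[(AY,SB,P1); (AX,SA,P3); (AZ,SI,P2); (AX,SB,P2)]);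
 (10,23,[(AY,SB,P1); (AX,SA,P3); (AZ,SI,P2); (AY,SnA,P2)]);
 (11,12,[(AY,SA,P1); (AZ,SB,P1); (AY,SB,P3); (AX,SB,P2); (AX,SA,P1)]);
 (11,13,[(AY,SnA,P3); (AZ,SB,P3); (AX,SA,P2); (AY,SB,P3); (AX,SA,P1)]);
 (11,14,[(AY,SB,P3); (AZ,SI,P1); (AZ,SB,P1); (AY,SI,P2); (AX,SA,P1)]);
 (11,15,[(AY,SB,P3); (AZ,SI,P3); (AZ,SB,P1); (AY,SI,P2); (AX,SA,P1)]);
 (11,16,[(AY,SA,P3); (AZ,SI,P3); (AZ,SnA,P3); (AY,SI,P3)]);
 (11,17,[(AZ,SI,P1); (AZ,SB,P3); (AX,SA,P2); (AY,SB,P3); (AX,SA,P1)]);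
 (11,18,[(AY,SB,P1); (AZ,SI,P2); (AZ,SB,P3); (AX,SA,P3)]);
 (11,19,[(AZ,SB,P3); (AX,SA,P2); (AY,SB,P3); (AX,SA,P1)]);
 (11,20,[(AZ,SB,P3); (AX,SA,P2); (AZ,SI,P3); (AY,SB,P3); (AX,SA,P1)]);
 (11,21,[(AY,SB,P3); (AX,SI,P3); (AX,SA,P1); (AY,SB,P3); (AY,SnA,P3)]);
 (11,22,[(AZ,SB,P3); (AX,SA,P2); (AY,SB,P3); (AX,SB,P2); (AX,SA,P1)]);
 (11,23,[(AZ,SB,P3); (AX,SA,P2); (AY,SB,P3); (AY,SnA,P2); (AX,SA,P1)]);
 (12,13,[(AY,SnA,P3); (AZ,SB,P3); (AY,SB,P1); (AX,SA,P2)]);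
 (12,14,[(AZ,SB,P1); (AX,SA,P1); (AY,SI,P2); (AZ,SA,P1); (AX,SB,P1)]);
 (12,15,[(AZ,SB,P1); (AZ,SnA,P1); (AX,SA,P1); (AY,SI,P2); (AX,SB,P1)]);
 (12,16,[(AZ,SI,P3); (AZ,SB,P1); (AX,SA,P1); (AY,SI,P2)]);
 (12,17,[(AZ,SI,P1); (AZ,SB,P1); (AX,SA,P1); (AY,SI,P2)]);
 (12,18,[(AZ,SI,P2); (AZ,SB,P1); (AX,SA,P1); (AY,SI,P2)]);
 (12,19,[(AZ,SB,P1); (AX,SA,P1); (AY,SI,P2)]);
 (12,20,[(AY,SA,P1); (AZ,SnI,P3); (AZ,SB,P1); (AY,SnA,P2); (AX,SA,P1)]);
 (12,21,[(AY,SA,P1); (AZ,SnI,P3); (AZ,SB,P1); (AX,SB,P2); (AX,SA,P1)]);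
 (12,22,[(AZ,SB,P1); (AX,SA,P1); (AY,SI,P2); (AX,SB,P2)]);
 (12,23,[(AZ,SB,P1); (AX,SA,P1); (AY,SI,P2); (AY,SnA,P2)]);
 (13,14,[(AZ,SB,P1); (AZ,SA,P1); (AY,SB,P3); (AX,SB,P1)]);
 (13,15,[(AZ,SB,P1); (AX,SI,P2); (AZ,SA,P1); (AY,SB,P3); (AX,SB,P1)]);
 (13,16,[(AZ,SI,P3); (AZ,SB,P1); (AZ,SA,P2); (AY,SB,P1)]);
 (13,17,[(AZ,SI,P1); (AZ,SB,P1); (AZ,SA,P2); (AY,SB,P1)]);
 (13,18,[(AY,SB,P3); (AZ,SI,P2); (AZ,SB,P1)]);
 (13,19,[(AZ,SB,P1); (AZ,SA,P2); (AY,SB,P1)]);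
 (13,20,[(AZ,SnI,P3); (AY,SnA,P2); (AZ,SB,P1); (AY,SB,P1); (AX,SA,P2)]);
 (13,21,[(AZ,SnI,P1); (AY,SnA,P2); (AZ,SB,P1); (AY,SB,P1); (AX,SA,P2)]);
 (13,22,[(AZ,SB,P1); (AZ,SA,P2); (AY,SB,P1); (AX,SB,P2)]);
 (13,23,[(AY,SnA,P2); (AZ,SB,P1); (AY,SB,P1); (AX,SA,P2)]);
 (14,15,[(AX,SI,P1); (AY,SA,P1); (AZ,SB,P1); (AX,SB,P2)]);
 (14,16,[(AZ,SI,P3); (AY,SB,P1); (AX,SA,P1); (AY,SB,P2)]);
 (14,17,[(AZ,SI,P1); (AY,SB,P1); (AX,SA,P1); (AY,SB,P2)]);
 (14,18,[(AY,SB,P3); (AX,SA,P1); (AZ,SI,P2); (AX,SA,P3)]);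
 (14,19,[(AY,SB,P1); (AX,SA,P1); (AY,SB,P2)]);
 (14,20,[(AY,SB,P1); (AX,SA,P1); (AY,SB,P2); (AZ,SA,P1); (AX,SB,P1)]);
 (14,21,[(AY,SB,P1); (AZ,SA,P3); (AX,SA,P1); (AY,SB,P2); (AX,SB,P1)]);
 (14,22,[(AY,SB,P1); (AX,SA,P1); (AY,SB,P2); (AX,SB,P2)]);
 (14,23,[(AY,SB,P1); (AX,SA,P1); (AY,SB,P2); (AY,SnA,P2)]);
 (15,16,[(AX,SnA,P1); (AZ,SI,P3); (AY,SnI,P2); (AY,SB,P3); (AX,SA,P3)]);
 (15,17,[(AX,SA,P1); (AZ,SI,P1); (AY,SB,P3); (AX,SA,P3)]);
 (15,18,[(AX,SA,P1); (AZ,SI,P2); (AY,SB,P3); (AX,SA,P3)]);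
 (15,19,[(AZ,SnA,P1); (AY,SI,P3)]);
 (15,20,[(AZ,SnI,P1); (AZ,SnA,P1); (AY,SI,P3); (AX,SB,P2)]);
 (15,21,[(AZ,SnI,P3); (AZ,SnA,P1); (AY,SI,P3); (AX,SB,P2)]);
 (15,22,[(AZ,SnA,P1); (AY,SI,P3); (AX,SB,P2)]);
 (15,23,[(AZ,SnA,P1); (AY,SI,P3); (AY,SnA,P2)]);
 (16,17,[(AX,SA,P1); (AZ,SI,P1); (AY,SB,P2); (AX,SA,P2)]);
 (16,18,[(AX,SA,P3); (AZ,SI,P2)]);
 (16,19,[(AX,SA,P1); (AY,SB,P2); (AX,SA,P2)]);
 (16,20,[(AZ,SnI,P1); (AX,SA,P3); (AZ,SI,P2); (AX,SB,P2)]);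
 (16,21,[(AX,SA,P1); (AY,SB,P2); (AZ,SI,P3); (AX,SA,P2)]);
 (16,22,[(AX,SA,P3); (AZ,SI,P2); (AX,SB,P2)]);
 (16,23,[(AX,SA,P3); (AZ,SI,P2); (AY,SnA,P2)]);
 (17,18,[(AY,SnA,P3); (AZ,SI,P2); (AZ,SB,P1); (AX,SA,P3)]);
 (17,19,[(AY,SA,P3); (AZ,SB,P3); (AY,SB,P2); (AX,SA,P1)]);
 (17,20,[(AX,SnA,P3); (AX,SA,P2); (AZ,SI,P3); (AY,SI,P2)]);
 (17,21,[(AY,SB,P2); (AZ,SI,P2); (AX,SA,P1); (AZ,SI,P1)]);
 (17,22,[(AX,SnA,P3); (AZ,SI,P3); (AY,SI,P2); (AX,SB,P2)]);
 (17,23,[(AX,SnA,P3); (AZ,SI,P3); (AY,SI,P2); (AY,SnA,P2)]);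
 (18,19,[(AY,SA,P1); (AZ,SB,P3); (AX,SA,P2)]);
 (18,20,[(AY,SB,P2); (AZ,SI,P1); (AX,SnA,P3); (AY,SI,P2)]);
 (18,21,[(AX,SnA,P2); (AZ,SI,P1); (AX,SnA,P3); (AY,SI,P2)]);
 (18,22,[(AZ,SI,P1); (AX,SnA,P3); (AY,SI,P2); (AX,SB,P2)]);
 (18,23,[(AZ,SI,P1); (AX,SnA,P3); (AY,SI,P2); (AY,SnA,P2)]);
 (19,20,[(AY,SB,P2); (AX,SA,P1); (AZ,SI,P1); (AX,SA,P3)]);
 (19,21,[(AX,SnA,P2); (AX,SA,P3); (AZ,SI,P1); (AX,SA,P3)]);
 (19,22,[(AX,SB,P2); (AX,SA,P1); (AZ,SnI,P3); (AX,SA,P1)]);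
 (19,23,[(AY,SnA,P2); (AX,SA,P1); (AZ,SnI,P1); (AX,SA,P1)]);
 (20,21,[(AX,SA,P3); (AZ,SnI,P3); (AX,SB,P2); (AX,SA,P2)]);
 (20,22,[(AX,SA,P1); (AY,SB,P2); (AX,SB,P2)]);
 (20,23,[(AX,SA,P1); (AY,SB,P2); (AY,SnA,P2)]);
 (21,22,[(AY,SnA,P3); (AZ,SnI,P2); (AZ,SB,P1); (AY,SnA,P2); (AX,SA,P1)]);
 (21,23,[(AZ,SnI,P2); (AY,SnA,P3); (AZ,SB,P1); (AX,SB,P2); (AX,SA,P1)])].
Definition P_Zer : list (list (axis*sym)) := [[(AX,SA); (AX,SA); (AX,SA)]; [(AX,SA); (AZ,SB); (AZ,SB)]; [(AX,SA); (AX,SA); (AZ,SnI); (AX,SB)]; [(AY,SB); (AZ,SnA)]; [(AX,SA)]; [(AX,SA); (AY,SnI); (AY,SnI)]; [(AZ,SI); (AX,SB)]; [(AX,SA); (AY,SnI)]; [(AX,SA); (AX,SA); (AX,SA); (AZ,SB)]; [(AX,SA); (AZ,SB); (AZ,SB); (AZ,SB)]; [(AY,SB); (AY,SB); (AY,SB)]; [(AX,SA); (AX,SA); (AY,SB)]; [(AX,SA); (AZ,SB)]; [(AX,SA); (AY,SnI); (AY,SnI); (AZ,SB)]; [(AX,SA); (AZ,SB); (AX,SI)]; [(AY,SB)]; []; [(AZ,SI); (AZ,SI)]; [(AZ,SI)]; [(AZ,SI); (AZ,SI); (AZ,SI)]; [(AX,SA); (AX,SA)]; [(AY,SB); (AY,SB)];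 [(AX,SA); (AX,SA); (AZ,SnI)]; [(AY,SB); (AY,SB); (AZ,SnI)]].
Definition S_Sam : list mpt := [MP (Sy SA) (Sy SI) (Sy SA); MP (Sy SA) (Sy SI) (Sy SnA); MP (Sy SnA) (Sy SI) (Sy SA); MP (Sy SnA) (Sy SI) (Sy SnA); MP (Sy SA) (Sy SnI) (Sy SA); MP (Sy SA) (Sy SnI) (Sy SnA); MP (Sy SnA) (Sy SnI) (Sy SA); MP (Sy SnA) (Sy SnI) (Sy SnA); MP (Sy SnI) (Sy SA) (Sy SA); MP (Sy SnI) (Sy SA) (Sy SnA); MP (Sy SnI) (Sy SnA) (Sy SA); MP (Sy SnI) (Sy SnA) (Sy SnA); MP (Sy SI) (Sy SA) (Sy SA); MP (Sy SI) (Sy SA) (Sy SnA); MP (Sy SI) (Sy SnA) (Sy SA); MP (Sy SI) (Sy SnA) (Sy SnA); MP (Sy SA) (Sy SA) (Sy SI); MP (Sy SA) (Sy SnA) (Sy SI); MP (Sy SnA) (Sy SA) (Sy SI); MP (Sy SnA) (Sy SnA) (Sy SI); MP (Sy SA) (Sy SA) (Sy SnI); MP (Sy SA) (Sy SnA) (Sy SnI); MP (Sy SnA) (Sy SA) (Sy SnI); MP (Sy SnA) (Sy SnA) (Sy SnI)].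
Definition X_Sam : list (nat*nat*list mtw) := [(0,1,[(AY,SI,P1); (AZ,SA,P1); (AX,SnA,P3); (AY,SnA,P2); (AY,SA,P1)]);
 (0,2,[(AX,SA,P1); (AZ,SA,P1); (AY,SnA,P1); (AZ,SnA,P1)]);
 (0,3,[(AX,SA,P2); (AZ,SnA,P2); (AX,SA,P3); (AY,SI,P3)]);
 (0,4,[(AZ,SA,P3); (AX,SnI,P3); (AY,SnA,P1); (AZ,SA,P3); (AX,SA,P1)]);
 (0,5,[(AY,SI,P2); (AZ,SA,P2); (AX,SA,P3); (AY,SI,P3)]);
 (0,6,[(AZ,SA,P3); (AY,SnA,P1); (AZ,SA,P3); (AX,SA,P1)]);
 (0,7,[(AX,SA,P1); (AY,SnA,P1); (AZ,SnA,P1); (AY,SnA,P3)]);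
 (0,8,[(AZ,SA,P3); (AY,SnA,P1); (AX,SA,P1)]);
 (0,9,[(AX,SnI,P1); (AZ,SA,P3); (AY,SnA,P1); (AX,SA,P1)]);
 (0,10,[(AX,SA,P1); (AY,SnA,P1); (AZ,SnA,P1)]);
 (0,11,[(AX,SnI,P2); (AZ,SA,P3); (AY,SnA,P1); (AX,SA,P1)]);
 (0,12,[(AX,SA,P1); (AZ,SA,P2); (AY,SnA,P1); (AZ,SnA,P1)]);
 (0,13,[(AY,SA,P2); (AZ,SA,P3); (AY,SnA,P1); (AX,SA,P1)]);
 (0,14,[(AZ,SA,P1); (AX,SnI,P2); (AY,SnA,P3); (AX,SA,P1)]);
 (0,15,[(AZ,SA,P3); (AY,SnA,P1); (AX,SA,P1); (AY,SnA,P2)]);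
 (0,16,[(AY,SI,P1); (AX,SnA,P1); (AZ,SI,P3)]);
 (0,17,[(AZ,SnA,P1); (AY,SI,P1); (AX,SnI,P1); (AY,SA,P1)]);
 (0,18,[(AZ,SI,P3); (AY,SI,P1); (AX,SnA,P1); (AZ,SI,P3)]);
 (0,19,[(AZ,SA,P3); (AY,SnA,P1); (AZ,SA,P1); (AX,SA,P1)]);
 (0,20,[(AY,SA,P1); (AX,SnI,P1); (AZ,SA,P3); (AY,SnA,P1); (AX,SA,P1)]);
 (0,21,[(AY,SI,P1); (AX,SnA,P3); (AY,SnA,P2); (AZ,SI,P1)]);
 (0,22,[(AY,SA,P1); (AZ,SA,P3); (AY,SnA,P1); (AX,SA,P1)]);
 (0,23,[(AZ,SA,P3); (AY,SnA,P1); (AX,SA,P1); (AY,SnA,P1)]);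
 (1,2,[(AX,SnA,P1); (AZ,SI,P1); (AX,SnA,P2); (AY,SA,P2)]);
 (1,3,[(AX,SnA,P1); (AZ,SI,P2)]);
 (1,4,[(AX,SnA,P3); (AZ,SA,P3); (AY,SnA,P1); (AY,SA,P2)]);
 (1,5,[(AY,SnI,P1); (AX,SnA,P3); (AZ,SI,P1); (AY,SA,P2)]);
 (1,6,[(AX,SnA,P3); (AZ,SI,P2); (AY,SA,P2)]);
 (1,7,[(AX,SnA,P3); (AZ,SI,P1); (AY,SA,P2)]);
 (1,8,[(AX,SA,P3); (AY,SI,P2); (AZ,SA,P3); (AX,SA,P1)]);
 (1,9,[(AX,SnA,P1); (AY,SA,P1); (AZ,SI,P2)]);
 (1,10,[(AY,SnA,P1); (AX,SnA,P3); (AY,SA,P2)]);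
 (1,11,[(AZ,SA,P1); (AY,SnA,P1); (AZ,SI,P1)]);
 (1,12,[(AX,SnA,P1); (AY,SA,P3); (AZ,SI,P2)]);
 (1,13,[(AZ,SA,P3); (AY,SA,P3); (AZ,SI,P3)]);
 (1,14,[(AX,SA,P3); (AY,SI,P2); (AZ,SA,P1); (AX,SA,P1)]);
 (1,15,[(AY,SnA,P3); (AX,SnA,P3); (AY,SA,P2)]);
 (1,16,[(AZ,SI,P3); (AX,SnA,P3); (AY,SA,P2)]);
 (1,17,[(AX,SnA,P3); (AY,SA,P2)]);
 (1,18,[(AZ,SI,P2); (AX,SnA,P3); (AY,SA,P2)]);
 (1,19,[(AZ,SI,P1); (AX,SnA,P3); (AY,SA,P2)]);
 (1,20,[(AX,SnA,P1); (AY,SA,P2); (AZ,SI,P2)]);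
 (1,21,[(AZ,SnI,P3); (AY,SnA,P2); (AX,SnA,P3); (AY,SA,P2)]);
 (1,22,[(AX,SnA,P2); (AZ,SI,P1); (AX,SnA,P1); (AY,SA,P2)]);
 (1,23,[(AY,SnA,P2); (AX,SnA,P3); (AY,SA,P2)]);
 (2,3,[(AZ,SnA,P2); (AX,SA,P3); (AY,SI,P2)]);
 (2,4,[(AX,SA,P2); (AY,SI,P3); (AX,SA,P1); (AY,SI,P3)]);
 (2,5,[(AX,SA,P3); (AY,SI,P2); (AZ,SA,P1); (AY,SA,P1)]);
 (2,6,[(AY,SI,P3); (AZ,SA,P2); (AX,SA,P1); (AY,SI,P3)]);
 (2,7,[(AY,SI,P2); (AX,SnA,P2); (AZ,SA,P1); (AY,SnA,P1); (AY,SA,P1)]);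
 (2,8,[(AY,SI,P3); (AZ,SA,P3); (AX,SA,P1); (AY,SI,P3)]);
 (2,9,[(AZ,SA,P2); (AX,SnA,P3); (AZ,SnI,P1); (AY,SA,P3); (AX,SA,P2)]);
 (2,10,[(AY,SI,P2); (AY,SnA,P1); (AZ,SA,P1); (AY,SA,P1)]);
 (2,11,[(AZ,SA,P2); (AY,SnA,P3); (AX,SA,P1); (AY,SI,P3); (AX,SA,P1)]);
 (2,12,[(AZ,SnA,P1); (AY,SA,P1); (AZ,SA,P2); (AY,SnA,P3); (AX,SA,P2)]);
 (2,13,[(AZ,SnA,P3); (AX,SA,P3); (AY,SI,P2); (AY,SA,P3)]);
 (2,14,[(AY,SI,P3); (AZ,SA,P1); (AX,SA,P1); (AY,SI,P3)]);
 (2,15,[(AY,SI,P2); (AZ,SA,P1); (AY,SnA,P3); (AY,SA,P1)]);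
 (2,16,[(AZ,SI,P3); (AY,SI,P2); (AZ,SA,P1); (AY,SA,P1)]);
 (2,17,[(AY,SI,P2); (AZ,SA,P1); (AY,SA,P1)]);
 (2,18,[(AZ,SI,P2); (AY,SI,P2); (AZ,SA,P1); (AY,SA,P1)]);
 (2,19,[(AZ,SI,P1); (AY,SI,P2); (AZ,SA,P1); (AY,SA,P1)]);
 (2,20,[(AZ,SnA,P1); (AZ,SA,P2); (AY,SnA,P3); (AX,SA,P2)]);
 (2,21,[(AZ,SA,P2); (AX,SA,P1); (AY,SI,P3); (AX,SA,P1)]);
 (2,22,[(AZ,SnI,P2); (AZ,SA,P2); (AX,SA,P1); (AY,SI,P3); (AX,SA,P1)]);
 (2,23,[(AY,SI,P2); (AZ,SA,P1); (AY,SnA,P2); (AY,SA,P1)]);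
 (3,4,[(AY,SnI,P1); (AX,SnA,P1); (AZ,SI,P3); (AX,SA,P3); (AY,SA,P2)]);
 (3,5,[(AX,SA,P3); (AY,SI,P3)]);
 (3,6,[(AX,SnA,P1); (AZ,SI,P3); (AX,SA,P3); (AY,SnA,P2)]);
 (3,7,[(AZ,SnA,P3); (AX,SnI,P3); (AY,SA,P3); (AZ,SnA,P1); (AX,SA,P3)]);
 (3,8,[(AY,SA,P2); (AZ,SnA,P3); (AY,SA,P3); (AX,SA,P3)]);
 (3,9,[(AX,SA,P3); (AY,SI,P3); (AX,SnI,P2); (AY,SnA,P1)]);
 (3,10,[(AX,SA,P3); (AY,SI,P3); (AY,SnA,P1)]);
 (3,11,[(AZ,SnA,P1); (AX,SA,P2); (AY,SnA,P3); (AX,SA,P1)]);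
 (3,12,[(AX,SI,P3); (AZ,SnA,P3); (AY,SA,P3); (AX,SA,P3)]);
 (3,13,[(AZ,SnA,P3); (AY,SA,P3); (AX,SA,P3)]);
 (3,14,[(AX,SI,P2); (AZ,SnA,P3); (AY,SA,P3); (AX,SA,P3)]);
 (3,15,[(AX,SA,P3); (AY,SI,P3); (AY,SnA,P3)]);
 (3,16,[(AY,SA,P1); (AZ,SnA,P3); (AY,SA,P3); (AX,SA,P3)]);
 (3,17,[(AZ,SA,P3); (AY,SI,P3); (AX,SnI,P3); (AY,SA,P1)]);
 (3,18,[(AX,SA,P3); (AY,SI,P3); (AX,SnA,P2); (AY,SnA,P2)]);
 (3,19,[(AY,SnI,P1); (AX,SA,P3); (AZ,SI,P1); (AY,SI,P3)]);
 (3,20,[(AX,SA,P2); (AY,SI,P3); (AZ,SA,P1); (AY,SA,P1)]);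
 (3,21,[(AX,SA,P3); (AZ,SA,P3); (AY,SI,P3); (AY,SnA,P1)]);
 (3,22,[(AY,SA,P3); (AZ,SnA,P3); (AY,SA,P3); (AX,SA,P3)]);
 (3,23,[(AX,SA,P3); (AY,SI,P3); (AY,SnA,P2)]);
 (4,5,[(AZ,SnA,P2); (AX,SnA,P1); (AZ,SnI,P1); (AY,SA,P2); (AX,SA,P2)]);
 (4,6,[(AZ,SnA,P3); (AY,SnA,P3); (AX,SA,P1); (AZ,SA,P2); (AX,SA,P1)]);
 (4,7,[(AZ,SnA,P3); (AY,SnA,P3); (AY,SA,P3); (AX,SA,P2)]);
 (4,8,[(AZ,SnA,P3); (AY,SnA,P3); (AX,SA,P1); (AZ,SA,P3); (AX,SA,P1)]);
 (4,9,[(AY,SA,P3); (AZ,SnA,P3); (AY,SnA,P3); (AX,SA,P2)]);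
 (4,10,[(AX,SA,P2); (AY,SnA,P1); (AZ,SA,P1); (AY,SA,P1)]);
 (4,11,[(AY,SnA,P3); (AZ,SnA,P2); (AX,SA,P1); (AY,SI,P3); (AX,SA,P1)]);
 (4,12,[(AZ,SnA,P3); (AY,SnA,P3); (AY,SA,P1); (AX,SA,P2)]);
 (4,13,[(AZ,SnA,P2); (AY,SnA,P3); (AX,SA,P1); (AY,SI,P3); (AX,SA,P1)]);
 (4,14,[(AY,SnI,P3); (AX,SA,P2); (AZ,SA,P1); (AY,SnA,P1); (AX,SA,P1)]);
 (4,15,[(AX,SA,P2); (AZ,SA,P1); (AY,SnA,P3); (AY,SA,P1)]);
 (4,16,[(AY,SnI,P2); (AZ,SnA,P2); (AX,SnA,P3); (AZ,SI,P3)]);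
 (4,17,[(AY,SnI,P2); (AZ,SnA,P2); (AZ,SA,P3); (AY,SA,P1)]);
 (4,18,[(AZ,SnA,P3); (AY,SnA,P3); (AY,SA,P2); (AX,SA,P2)]);
 (4,19,[(AX,SA,P2); (AZ,SI,P1); (AZ,SA,P1); (AY,SA,P1)]);
 (4,20,[(AZ,SnA,P3); (AY,SnA,P3); (AX,SA,P2)]);
 (4,21,[(AZ,SnA,P2); (AX,SA,P1); (AY,SI,P3); (AX,SA,P1)]);
 (4,22,[(AZ,SnI,P3); (AZ,SnA,P3); (AY,SnA,P3); (AX,SA,P2)]);
 (4,23,[(AZ,SnI,P2); (AZ,SnA,P3); (AY,SnA,P3); (AX,SA,P2)]);
 (5,6,[(AY,SnI,P2); (AX,SA,P1); (AY,SnI,P1); (AX,SA,P2)]);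
 (5,7,[(AX,SnA,P1); (AZ,SnI,P3); (AY,SnI,P3); (AX,SA,P2); (AY,SA,P2)]);
 (5,8,[(AZ,SA,P3); (AX,SA,P1); (AY,SA,P1); (AZ,SnA,P3)]);
 (5,9,[(AY,SnI,P1); (AX,SA,P3); (AZ,SnA,P2); (AY,SnA,P3)]);
 (5,10,[(AY,SnI,P1); (AX,SA,P3); (AZ,SnA,P2); (AY,SnA,P1)]);
 (5,11,[(AY,SnI,P1); (AZ,SnA,P1); (AX,SA,P3); (AZ,SnA,P1)]);
 (5,12,[(AY,SnI,P3); (AY,SA,P1); (AX,SA,P1); (AZ,SnA,P2); (AX,SA,P1)]);
 (5,13,[(AY,SnI,P1); (AZ,SnA,P3); (AX,SA,P3); (AZ,SnA,P3)]);
 (5,14,[(AY,SnI,P3); (AX,SA,P1); (AZ,SnA,P2); (AZ,SA,P1); (AX,SA,P1)]);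
 (5,15,[(AY,SnI,P1); (AX,SA,P3); (AY,SnA,P3); (AZ,SnA,P2)]);
 (5,16,[(AX,SnA,P3); (AZ,SI,P3); (AZ,SnA,P2); (AY,SI,P3)]);
 (5,17,[(AZ,SnA,P2); (AZ,SA,P3); (AY,SI,P3); (AY,SA,P1)]);
 (5,18,[(AY,SnI,P3); (AY,SA,P2); (AX,SA,P1); (AZ,SnA,P2); (AX,SA,P1)]);
 (5,19,[(AY,SnA,P2); (AX,SnA,P1); (AZ,SnI,P1); (AY,SnI,P3); (AX,SA,P2)]);
 (5,20,[(AY,SnI,P3); (AX,SA,P1); (AZ,SnA,P2); (AX,SA,P1)]);
 (5,21,[(AX,SnA,P1); (AZ,SnI,P1); (AY,SnI,P3); (AX,SA,P2)]);
 (5,22,[(AZ,SnI,P3); (AY,SnI,P3); (AX,SA,P1); (AZ,SnA,P2); (AX,SA,P1)]);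
 (5,23,[(AY,SnI,P1); (AX,SA,P3); (AZ,SnA,P2); (AY,SnA,P2)]);
 (6,7,[(AY,SnI,P3); (AX,SA,P3); (AZ,SnA,P2); (AY,SA,P1)]);
 (6,8,[(AZ,SA,P1); (AY,SnI,P2); (AX,SA,P2); (AY,SnA,P1); (AX,SA,P1)]);
 (6,9,[(AZ,SnA,P2); (AX,SI,P3); (AZ,SA,P1); (AY,SnA,P1); (AX,SA,P1)]);
 (6,10,[(AY,SnI,P2); (AX,SA,P3); (AY,SnA,P1); (AZ,SnA,P1)]);
 (6,11,[(AY,SnI,P2); (AZ,SnA,P1); (AY,SA,P3); (AX,SA,P3)]);
 (6,12,[(AX,SnA,P3); (AY,SA,P3); (AZ,SI,P2); (AZ,SnA,P3)]);
 (6,13,[(AZ,SnA,P2); (AY,SnA,P2); (AZ,SA,P1); (AY,SnA,P1); (AX,SA,P1)]);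
 (6,14,[(AZ,SnA,P2); (AZ,SA,P1); (AY,SnA,P1); (AX,SA,P1)]);
 (6,15,[(AX,SnA,P1); (AY,SnA,P3); (AZ,SnA,P1); (AY,SA,P2)]);
 (6,16,[(AX,SnA,P2); (AY,SI,P3); (AX,SnA,P1); (AZ,SI,P3)]);
 (6,17,[(AZ,SA,P2); (AY,SI,P1); (AX,SnA,P1); (AY,SA,P2)]);
 (6,18,[(AZ,SnA,P2); (AX,SnA,P1); (AZ,SnI,P1); (AZ,SA,P2); (AX,SA,P1)]);
 (6,19,[(AY,SnI,P3); (AX,SA,P3); (AZ,SI,P1); (AZ,SnA,P2)]);
 (6,20,[(AY,SnI,P1); (AX,SA,P2); (AZ,SA,P3); (AY,SA,P1)]);
 (6,21,[(AY,SnI,P1); (AX,SnA,P1); (AZ,SnI,P1); (AX,SA,P2)]);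
 (6,22,[(AY,SnI,P3); (AX,SA,P1); (AZ,SnI,P3); (AY,SnI,P2); (AX,SA,P2)]);
 (6,23,[(AZ,SnI,P1); (AY,SnI,P1); (AX,SnA,P1); (AZ,SnI,P1); (AX,SA,P2)]);
 (7,8,[(AY,SA,P1); (AZ,SI,P3); (AZ,SnA,P2)]);
 (7,9,[(AZ,SnA,P2); (AY,SnA,P3); (AY,SA,P1)]);
 (7,10,[(AZ,SnA,P2); (AY,SnA,P1); (AY,SA,P1)]);
 (7,11,[(AZ,SnA,P2); (AX,SI,P3); (AY,SnA,P3); (AY,SA,P1)]);
 (7,12,[(AZ,SnA,P2); (AX,SI,P2); (AY,SnA,P3); (AY,SA,P1)]);
 (7,13,[(AX,SI,P3); (AY,SnA,P3); (AZ,SnA,P2); (AY,SA,P1)]);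
 (7,14,[(AZ,SnA,P2); (AX,SI,P1); (AY,SnA,P3); (AY,SA,P1)]);
 (7,15,[(AY,SnA,P3); (AZ,SnA,P2); (AY,SA,P1)]);
 (7,16,[(AZ,SI,P3); (AZ,SnA,P2); (AY,SA,P1)]);
 (7,17,[(AZ,SnA,P2); (AY,SA,P1)]);
 (7,18,[(AZ,SI,P2); (AZ,SnA,P2); (AY,SA,P1)]);
 (7,19,[(AZ,SI,P1); (AZ,SnA,P2); (AY,SA,P1)]);
 (7,20,[(AY,SnI,P2); (AX,SA,P2); (AY,SA,P1)]);
 (7,21,[(AZ,SnI,P1); (AY,SnI,P2); (AX,SA,P2); (AY,SA,P1)]);
 (7,22,[(AZ,SnI,P3); (AY,SnI,P2); (AX,SA,P2); (AY,SA,P1)]);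
 (7,23,[(AZ,SnA,P2); (AY,SnA,P2); (AY,SA,P1)]);
 (8,9,[(AY,SA,P1); (AZ,SA,P1); (AX,SA,P1); (AY,SA,P2); (AX,SA,P2)]);
 (8,10,[(AY,SA,P1); (AX,SA,P3); (AZ,SI,P3); (AY,SnA,P1)]);
 (8,11,[(AZ,SnA,P3); (AX,SnA,P2); (AZ,SA,P2); (AY,SnA,P1); (AX,SA,P1)]);
 (8,12,[(AY,SA,P1); (AZ,SnI,P2); (AX,SA,P3); (AZ,SI,P3); (AY,SnA,P2)]);
 (8,13,[(AZ,SnA,P3); (AY,SnI,P2); (AZ,SA,P2); (AY,SnA,P1); (AX,SA,P1)]);
 (8,14,[(AZ,SnA,P3); (AX,SnI,P2); (AZ,SA,P1); (AY,SnA,P3); (AX,SA,P1)]);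
 (8,15,[(AY,SA,P1); (AX,SA,P3); (AZ,SI,P3); (AY,SnA,P3)]);
 (8,16,[(AX,SA,P1); (AY,SA,P1); (AX,SA,P3); (AZ,SI,P3)]);
 (8,17,[(AZ,SA,P3); (AY,SI,P1); (AX,SnI,P1); (AY,SA,P1)]);
 (8,18,[(AX,SnI,P3); (AY,SnA,P1); (AZ,SI,P2); (AZ,SnA,P3)]);
 (8,19,[(AZ,SnA,P3); (AZ,SA,P2); (AY,SnA,P1); (AZ,SA,P1); (AX,SA,P1)]);
 (8,20,[(AX,SnI,P3); (AY,SnA,P3); (AX,SA,P2); (AZ,SnA,P3)]);
 (8,21,[(AX,SA,P3); (AY,SA,P1); (AX,SA,P3); (AZ,SI,P3)]);
 (8,22,[(AZ,SnA,P1); (AY,SA,P1); (AZ,SA,P1); (AY,SnI,P2); (AX,SA,P3)]);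
 (8,23,[(AX,SnI,P1); (AY,SnA,P2); (AZ,SnA,P1); (AY,SA,P1)]);
 (9,10,[(AY,SnA,P1); (AZ,SnA,P3); (AX,SnA,P2); (AY,SA,P2)]);
 (9,11,[(AY,SnA,P1); (AZ,SI,P1); (AZ,SnA,P3)]);
 (9,12,[(AY,SA,P1); (AX,SA,P3); (AZ,SI,P3); (AZ,SA,P1); (AX,SA,P3)]);
 (9,13,[(AZ,SnA,P3); (AY,SI,P3); (AZ,SA,P1); (AY,SA,P1); (AX,SA,P3)]);
 (9,14,[(AZ,SnA,P3); (AX,SnI,P3); (AX,SI,P1); (AY,SnA,P3); (AY,SA,P1)]);
 (9,15,[(AY,SnA,P3); (AZ,SnI,P3); (AZ,SnA,P3); (AY,SA,P2)]);
 (9,16,[(AZ,SI,P3); (AZ,SnA,P3); (AX,SnI,P3); (AY,SA,P1)]);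
 (9,17,[(AZ,SnA,P3); (AX,SnI,P3); (AY,SA,P1)]);
 (9,18,[(AZ,SI,P2); (AZ,SnA,P3); (AX,SnI,P3); (AY,SA,P1)]);
 (9,19,[(AZ,SI,P1); (AZ,SnA,P3); (AX,SnI,P3); (AY,SA,P1)]);
 (9,20,[(AX,SA,P2); (AZ,SnA,P3); (AX,SnI,P3); (AY,SA,P1)]);
 (9,21,[(AZ,SnI,P1); (AX,SA,P2); (AZ,SnA,P3); (AX,SnI,P3); (AY,SA,P1)]);
 (9,22,[(AY,SnA,P1); (AX,SnA,P2); (AZ,SI,P1); (AZ,SnA,P3)]);
 (9,23,[(AZ,SnA,P3); (AX,SnI,P3); (AY,SnA,P2); (AY,SA,P1)]);
 (10,11,[(AZ,SnA,P1); (AZ,SA,P3); (AX,SA,P3); (AY,SI,P2)]);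
 (10,12,[(AY,SA,P1); (AZ,SA,P1); (AY,SnA,P3); (AX,SA,P2)]);
 (10,13,[(AZ,SA,P1); (AY,SnA,P3); (AX,SI,P1); (AY,SA,P1); (AX,SA,P2)]);
 (10,14,[(AX,SnI,P1); (AZ,SA,P1); (AY,SnA,P3); (AZ,SnA,P3); (AX,SA,P1)]);
 (10,15,[(AX,SnI,P2); (AY,SnA,P3); (AZ,SnA,P3); (AY,SA,P1)]);
 (10,16,[(AZ,SI,P3); (AX,SnI,P2); (AZ,SnA,P3); (AY,SA,P1)]);
 (10,17,[(AX,SnI,P2); (AZ,SnA,P3); (AY,SA,P1)]);
 (10,18,[(AZ,SA,P1); (AY,SnA,P3); (AY,SA,P2); (AX,SA,P2)]);
 (10,19,[(AZ,SI,P1); (AX,SnI,P2); (AZ,SnA,P3); (AY,SA,P1)]);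
 (10,20,[(AZ,SA,P1); (AY,SnA,P3); (AX,SA,P2)]);
 (10,21,[(AZ,SnI,P1); (AZ,SA,P1); (AY,SnA,P3); (AX,SA,P2)]);
 (10,22,[(AZ,SnI,P3); (AZ,SA,P1); (AY,SnA,P3); (AX,SA,P2)]);
 (10,23,[(AZ,SnI,P2); (AZ,SA,P1); (AY,SnA,P3); (AX,SA,P2)]);
 (11,12,[(AY,SA,P1); (AX,SA,P1); (AY,SnA,P3); (AX,SA,P1); (AY,SA,P2)]);
 (11,13,[(AZ,SnA,P3); (AZ,SA,P3); (AX,SA,P3); (AY,SI,P3)]);
 (11,14,[(AZ,SA,P3); (AX,SA,P2); (AZ,SA,P2); (AY,SnA,P3); (AX,SA,P1)]);
 (11,15,[(AY,SA,P2); (AX,SnI,P1); (AY,SnA,P3); (AZ,SnA,P3); (AY,SA,P1)]);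
 (11,16,[(AZ,SA,P3); (AX,SA,P2); (AY,SnA,P3); (AZ,SA,P1); (AX,SA,P1)]);
 (11,17,[(AY,SA,P2); (AX,SnI,P1); (AZ,SnA,P3); (AY,SA,P1)]);
 (11,18,[(AX,SI,P1); (AY,SnA,P3); (AX,SA,P1); (AZ,SI,P2)]);
 (11,19,[(AY,SnA,P3); (AZ,SnA,P3); (AZ,SA,P1); (AY,SI,P2); (AX,SA,P1)]);
 (11,20,[(AX,SI,P1); (AY,SnA,P1); (AX,SA,P1); (AY,SnA,P2); (AX,SA,P1)]);
 (11,21,[(AZ,SA,P1); (AY,SI,P2); (AY,SnA,P3); (AZ,SA,P1); (AX,SA,P1)]);
 (11,22,[(AZ,SnA,P2); (AZ,SA,P3); (AY,SA,P3); (AZ,SnA,P3); (AX,SA,P3)]);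
 (11,23,[(AX,SnA,P1); (AZ,SA,P1); (AY,SI,P2); (AY,SnA,P3); (AX,SA,P1)]);
 (12,13,[(AY,SnA,P1); (AZ,SA,P3); (AX,SI,P1); (AY,SA,P1); (AX,SA,P2)]);
 (12,14,[(AZ,SA,P1); (AX,SA,P1); (AY,SI,P2); (AY,SA,P3)]);
 (12,15,[(AY,SnA,P3); (AY,SA,P2); (AZ,SnA,P3); (AY,SA,P1)]);
 (12,16,[(AZ,SI,P3); (AY,SA,P2); (AZ,SnA,P3); (AY,SA,P1)]);
 (12,17,[(AY,SA,P2); (AZ,SnA,P3); (AY,SA,P1)]);
 (12,18,[(AZ,SA,P3); (AY,SA,P2); (AX,SA,P2); (AY,SA,P1)]);
 (12,19,[(AZ,SI,P1); (AY,SA,P2); (AZ,SnA,P3); (AY,SA,P1)]);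
 (12,20,[(AZ,SA,P3); (AX,SA,P2); (AY,SA,P3)]);
 (12,21,[(AZ,SnI,P1); (AZ,SA,P3); (AX,SA,P2); (AY,SA,P3)]);
 (12,22,[(AY,SA,P2); (AZ,SI,P3); (AZ,SnA,P3); (AY,SA,P1)]);
 (12,23,[(AZ,SA,P3); (AY,SA,P1); (AZ,SnI,P2); (AX,SA,P2)]);
 (13,14,[(AZ,SnA,P1); (AZ,SA,P1); (AX,SA,P1); (AY,SI,P3)]);
 (13,15,[(AY,SA,P3); (AZ,SA,P2); (AX,SA,P3); (AY,SnA,P3); (AY,SA,P1)]);
 (13,16,[(AZ,SA,P3); (AX,SA,P1); (AY,SnI,P1); (AY,SA,P3); (AX,SA,P3)]);
 (13,17,[(AZ,SnA,P1); (AZ,SA,P2); (AY,SI,P3); (AY,SA,P1)]);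
 (13,18,[(AY,SnA,P3); (AZ,SI,P2); (AZ,SnA,P1); (AY,SI,P3)]);
 (13,19,[(AZ,SI,P1); (AZ,SnA,P1); (AZ,SA,P2); (AY,SI,P3); (AY,SA,P1)]);
 (13,20,[(AZ,SnA,P3); (AY,SnI,P3); (AY,SnA,P1); (AX,SA,P2)]);
 (13,21,[(AZ,SnI,P1); (AZ,SnA,P3); (AY,SnI,P3); (AY,SnA,P1); (AX,SA,P2)]);
 (13,22,[(AY,SA,P3); (AZ,SnA,P3); (AX,SA,P1); (AY,SnA,P1); (AX,SA,P2)]);
 (13,23,[(AZ,SnI,P2); (AZ,SnA,P3); (AY,SnI,P3); (AY,SnA,P1); (AX,SA,P2)]);
 (14,15,[(AZ,SA,P1); (AY,SI,P1); (AY,SnA,P3)]);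
 (14,16,[(AZ,SI,P3); (AX,SI,P1); (AY,SA,P3); (AZ,SnA,P1)]);
 (14,17,[(AX,SI,P1); (AY,SA,P3); (AZ,SnA,P1)]);
 (14,18,[(AZ,SI,P2); (AX,SI,P1); (AY,SA,P3); (AZ,SnA,P1)]);
 (14,19,[(AZ,SnA,P1); (AY,SnA,P1); (AZ,SA,P1); (AX,SA,P1)]);
 (14,20,[(AX,SA,P1); (AZ,SnA,P1); (AY,SnA,P1); (AX,SA,P1)]);
 (14,21,[(AZ,SnI,P1); (AX,SA,P1); (AZ,SnA,P1); (AY,SnA,P1); (AX,SA,P1)]);
 (14,22,[(AZ,SnI,P3); (AX,SA,P1); (AZ,SnA,P1); (AY,SnA,P1); (AX,SA,P1)]);
 (14,23,[(AZ,SnA,P1); (AY,SnA,P1); (AX,SA,P1); (AY,SnA,P1)]);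
 (15,16,[(AZ,SI,P3); (AZ,SnA,P1); (AX,SnA,P2); (AY,SA,P2)]);
 (15,17,[(AZ,SnA,P1)]);
 (15,18,[(AZ,SnA,P1); (AX,SnA,P2); (AY,SnA,P2)]);
 (15,19,[(AX,SnA,P1); (AZ,SnA,P1); (AY,SnA,P3)]);
 (15,20,[(AZ,SnI,P2); (AZ,SnA,P1); (AY,SnA,P2)]);
 (15,21,[(AZ,SnI,P3); (AZ,SnA,P1); (AY,SnA,P2)]);
 (15,22,[(AZ,SnI,P1); (AZ,SnA,P1); (AY,SnA,P2)]);
 (15,23,[(AZ,SnA,P1); (AY,SnA,P2)]);
 (16,17,[(AY,SnA,P3); (AX,SA,P3); (AZ,SI,P3); (AY,SnA,P1)]);
 (16,18,[(AX,SA,P3); (AZ,SI,P2); (AZ,SA,P1); (AY,SA,P1)]);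
 (16,19,[(AZ,SI,P1); (AX,SnA,P3); (AY,SI,P3)]);
 (16,20,[(AZ,SI,P3); (AY,SnA,P2); (AX,SA,P1); (AZ,SnI,P1); (AX,SA,P1)]);
 (16,21,[(AY,SnA,P3); (AX,SI,P2); (AZ,SnA,P3); (AZ,SA,P1); (AX,SA,P3)]);
 (16,22,[(AX,SnA,P2); (AZ,SI,P1); (AX,SnA,P3); (AY,SI,P3)]);
 (16,23,[(AX,SA,P3); (AZ,SA,P1); (AY,SnA,P2); (AY,SA,P1)]);
 (17,18,[(AX,SA,P3); (AZ,SI,P2); (AY,SI,P1)]);
 (17,19,[(AX,SA,P3); (AZ,SI,P1); (AY,SI,P1); (AX,SnA,P2); (AY,SA,P2)]);
 (17,20,[(AX,SA,P1); (AY,SA,P3); (AZ,SnA,P3); (AY,SnA,P3); (AX,SA,P1)]);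
 (17,21,[(AX,SA,P3); (AZ,SI,P3); (AY,SI,P1); (AZ,SA,P3); (AY,SnA,P1)]);
 (17,22,[(AZ,SI,P1); (AX,SA,P1); (AZ,SnI,P3); (AY,SnA,P2); (AX,SA,P2)]);
 (17,23,[(AY,SnA,P1); (AZ,SI,P3); (AZ,SnA,P1); (AY,SnA,P1)]);
 (18,19,[(AX,SA,P2); (AZ,SI,P1); (AX,SnA,P3); (AY,SI,P2)]);
 (18,20,[(AY,SnA,P2); (AX,SnA,P1); (AY,SnI,P1); (AX,SA,P2)]);
 (18,21,[(AX,SA,P3); (AZ,SI,P3); (AX,SA,P3); (AZ,SI,P3)]);
 (18,22,[(AZ,SnI,P3); (AY,SnA,P2); (AX,SnA,P1); (AY,SnI,P1); (AX,SA,P2)]);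
 (18,23,[(AZ,SI,P2); (AY,SnA,P1); (AZ,SnA,P1); (AY,SnA,P1)]);
 (19,20,[(AX,SA,P1); (AY,SnA,P2); (AX,SA,P1)]);
 (19,21,[(AY,SnA,P2); (AX,SA,P1); (AZ,SI,P1); (AZ,SA,P1); (AY,SA,P1)]);
 (19,22,[(AZ,SnI,P3); (AX,SA,P1); (AY,SnA,P2); (AX,SA,P1)]);
 (19,23,[(AY,SnA,P2); (AZ,SnI,P1); (AY,SA,P1); (AZ,SnA,P3); (AY,SA,P1)]);
 (20,21,[(AZ,SnI,P3); (AX,SA,P1); (AZ,SA,P1); (AY,SnA,P2); (AY,SA,P1)]);
 (20,22,[(AX,SA,P1); (AY,SA,P1); (AZ,SA,P3); (AY,SnA,P1); (AX,SA,P1)]);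
 (20,23,[(AX,SA,P2); (AY,SnA,P1); (AZ,SnA,P1); (AY,SnA,P1)]);
 (21,22,[(AX,SA,P3); (AZ,SnI,P3); (AX,SA,P2); (AY,SA,P2)]);
 (21,23,[(AX,SnA,P1); (AY,SI,P2); (AX,SA,P1)])].
Definition P_Sam : list (list (axis*sym)) := [[(AX,SA); (AX,SA); (AZ,SnI); (AX,SA)]; [(AX,SA); (AX,SA); (AX,SA)]; [(AX,SA); (AZ,SA); (AZ,SA)]; [(AY,SA); (AZ,SnA)]; [(AX,SA)]; [(AX,SA); (AY,SnI)]; [(AZ,SI); (AX,SnA)]; [(AX,SA); (AY,SnI); (AY,SnI)]; [(AY,SA); (AY,SA); (AY,SA)]; [(AX,SA); (AX,SA); (AX,SA); (AZ,SnA)]; [(AX,SA); (AZ,SA); (AZ,SA); (AZ,SA)]; [(AX,SA); (AX,SA); (AY,SnA)]; [(AX,SA); (AZ,SA)]; [(AY,SA)]; [(AX,SA); (AZ,SA); (AX,SI)]; [(AX,SA); (AY,SnI); (AY,SnI); (AZ,SnA)]; []; [(AZ,SI); (AZ,SI); (AZ,SI)]; [(AZ,SI)]; [(AZ,SI); (AZ,SI)]; [(AX,SA); (AX,SA); (AZ,SnI)]; [(AX,SA); (AX,SA)]; [(AY,SA); (AY,SA)]; [(AY,SA); (AY,SA); (AZ,SnI)]].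

Definition Sd c := match c with Gen => S_Gen | Zer => S_Zer | Sam => S_Sam end.
Definition Xd c := match c with Gen => X_Gen | Zer => X_Zer | Sam => X_Sam end.
Definition Pd c := match c with Gen => P_Gen | Zer => P_Zer | Sam => P_Sam end.
Definition dflt : mpt := MP (Sy SI) (Sy SI) (Sy SI).
Definition Sn c m := nth m (Sd c) dflt.
Definition pinv k := match k with P1 => P3 | P2 => P2 | P3 => P1 end.
Definition invw (X : list mtw) : list mtw := rev (map (fun t => let '(i,s,k) := t in (i,s,pinv k)) X).
Definition Kw : list mtw := [(AX,SA,P1);(AY,SB,P1);(AX,SA,P3);(AY,SB,P3)].
Definition Tw : list mtw := [(AZ,SI,P1)].
Definition Bw : list mtw := Kw ++ Tw ++ invw Kw ++ invw Tw.
Definition lookupX c i j : list mtw :=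
  match find (fun e => let '(a,b,_) := e in (a =? i) && (b =? j)) (Xd c) with
  | Some (_,_,X) => X | None => [] end.
Definition word c i j := let X := lookupX c i j in X ++ Bw ++ invw X.
Definition kk i j := if j =? i + 1 then i + 2 else i + 1.
Definition cyc i j k m := if m =? i then j else if m =? j then k else if m =? k then i else m.
Definition memS c a := existsb (mpt_eqb a) (Sd c).
Fixpoint idx (a : mpt) (l : list mpt) : nat :=
  match l with [] => 0 | x :: l => if mpt_eqb a x then 0 else S (idx a l) end.
Definition ix c a := idx a (Sd c).

Definition chk_word c i j :=
  let w := word c i j in
  forallb (fun m => mpt_eqb (phim c w (Sn c m)) (Sn c (cyc i j (kk i j) m))) (seq 0 24) &&
  forallb (fun a => negb (mcell a) || memS c a || mpt_eqb (phim c w a) a) (Alist c).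
Definition chk_words c :=
  forallb (fun i => forallb (fun j => chk_word c i j) (seq (i+1) (23 - i))) (seq 0 22).
Definition chk_S c :=
  (length (Sd c) =? 24) && forallb (fun m => allsy m && mcell m) (Sd c).
Definition axes := [AX;AY;AZ].
Definition pows := [P1;P2;P3].
Definition chk_closed c :=
  forallb (fun m => forallb (fun i => forallb (fun s =>
     let q := qtm c i s (Sn c m) in (ix c q <? 24) && mpt_eqb (Sn c (ix c q)) q) allsyms) axes) (seq 0 24).
Definition pit c t m := ix c (tinvm c t (Sn c m)).
Definition chk_perm1 c t :=
  forallb (fun m => (pit c t m <? 24) && mpt_eqb (Sn c (pit c t m)) (tinvm c t (Sn c m))) (seq 0 24) &&
  forallb (fun a => forallb (fun b => negb (pit c t a =? pit c t b) || (a =? b)) (seq 0 24)) (seq 0 24).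
Definition chk_perm c :=
  forallb (fun i => forallb (fun s => forallb (fun k => chk_perm1 c (i,s,k)) pows) allsyms) axes.
Definition rep0 c := MP (Sy (norm c SA)) (Sy (norm c SB)) (Sy SI).
Definition runpath c (P : list (axis*sym)) (q : mpt) :=
  fold_left (fun q e => let '(i,s) := e in qtm c i s q) P q.
Definition chk_paths c :=
  forallb (fun m => mpt_eqb (runpath c (nth m (Pd c) []) (rep0 c)) (Sn c m)) (seq 0 24) &&
  (ix c (rep0 c) <? 24) && mpt_eqb (Sn c (ix c (rep0 c))) (rep0 c).
Definition ocol_eqb (x y : option color) : bool :=
  match x, y with
  | None, None => true
  | Some a, Some b => match a, b with Red,Red|White,White|Green,Green|Orange,Orange|Yellow,Yellow|Blue,Blue => true | _,_ => false end
  | _, _ => false end.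
Definition cnt x (l : list (option color)) := length (filter (ocol_eqb x) l).
Definition colors := [Red;White;Green;Orange;Yellow;Blue].
Definition chk_sol c :=
  forallb (fun k => cnt (Some k) (map (fun m => msol (Sn c m)) (seq 0 24)) =? 4) colors &&
  ocol_eqb (msol (Sn c 22)) (msol (Sn c 23)).
Definition allchk c := chk_S c && chk_closed c && chk_perm c && chk_paths c && chk_sol c && chk_words c.
Lemma allchk_ok c : allchk c = true.
Proof. destruct c; vm_compute; reflexivity. Qed.


Lemma forallb_seq f a n : forallb f (seq a n) = true -> forall m, a <= m < a + n -> f m = true.
Proof. intros H m Hm. rewrite forallb_forall in H. apply H. apply in_seq. lia. Qed.

Lemma ocol_eqb_spec x y : ocol_eqb x y = true <-> x = y.
Proof. destruct x as [[]|], y as [[]|]; simpl; split; congruence. Qed.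

Lemma cnt_perm x l l' : Permutation l l' -> cnt x l = cnt x l'.
Proof. unfold cnt. intro P; induction P; simpl; auto.
  - destruct (ocol_eqb x x0); simpl; auto.
  - destruct (ocol_eqb x x0), (ocol_eqb x y); simpl; auto.
  - congruence. Qed.

Lemma cnt_app x l l' : cnt x (l ++ l') = cnt x l + cnt x l'.
Proof. unfold cnt. rewrite filter_app, length_app. reflexivity. Qed.

Lemma cnt_mono {T} x (g1 g2 : T -> option color) l :
  (forall m, In m l -> g1 m = x -> g2 m = x) -> cnt x (map g1 l) <= cnt x (map g2 l).
Proof. unfold cnt. induction l as [|a l IH]; simpl; intro H; auto.
  destruct (ocol_eqb x (g1 a)) eqn:E1.
  - apply ocol_eqb_spec in E1. rewrite (H a (or_introl eq_refl) (eq_sym E1)).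
    assert (ocol_eqb x x = true) as -> by (apply ocol_eqb_spec; auto). simpl.
    apply le_n_S. apply IH; auto.
  - destruct (ocol_eqb x (g2 a)); simpl; [apply le_S|]; apply IH; auto. Qed.

Lemma cnt_sum l : length l = cnt None l + fold_right (fun k acc => cnt (Some k) l + acc) 0 colors.
Proof. unfold cnt; induction l as [|a l IH]; simpl; auto.
  simpl in *. destruct a as [[]|]; simpl; lia. Qed.

Lemma perm_of_inj n (h : nat -> nat) : (forall a, a < n -> h a < n) ->
  (forall a b, a < n -> b < n -> h a = h b -> a = b) -> Permutation (map h (seq 0 n)) (seq 0 n).
Proof. intros H1 H2. apply NoDup_Permutation_bis.
  - apply NoDup_map_NoDup_ForallPairs; [|apply seq_NoDup].
    intros a b Ha Hb. apply in_seq in Ha, Hb. apply H2; lia.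
  - rewrite length_map; auto.
  - intros y Hy. apply in_map_iff in Hy as [a [<- Ha]]. apply in_seq in Ha. apply in_seq. specialize (H1 a). lia.
Qed.

Lemma slt_wf {W} (lt : W -> W -> Prop) : well_founded lt -> well_founded (slt lt).
Proof. intro wf.
  assert (HS : forall w, Acc (slt lt) (Some w)).
  { intro w; induction (wf w) as [w _ IH]; constructor; intros [y|] Hy; simpl in Hy; [apply IH; auto|contradiction]. }
  intros [w|]; auto. constructor; intros [y|] Hy; [apply HS|contradiction]. Qed.

Lemma iter_fix {T} (g : T -> T) x n : g x = x -> Nat.iter n g x = x.
Proof. intro H; induction n; simpl; auto. rewrite IHn; auto. Qed.


Strategy expand [allchk chk_S chk_closed chk_perm chk_perm1 chk_paths chk_sol chk_words chk_word].

Lemma chks c : chk_S c = true /\ chk_closed c = true /\ chk_perm c = true /\ chk_paths c = true /\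
  chk_sol c = true /\ chk_words c = true.
Proof. pose proof (allchk_ok c) as H. unfold allchk in H.
  repeat rewrite andb_true_iff in H. tauto. Qed.

Lemma S_len c : length (Sd c) = 24.
Proof. destruct (chks c) as [H _]. unfold chk_S in H. apply andb_true_iff in H as [H _].
  apply (proj1 (Nat.eqb_eq _ _)); auto. Qed.

Lemma S_props c m : m < 24 -> allsy (Sn c m) = true /\ mcell (Sn c m) = true.
Proof. intro Hm. destruct (chks c) as [H _]. unfold chk_S in H. apply andb_true_iff in H as [_ H].
  rewrite forallb_forall in H. apply (proj1 (andb_true_iff _ _)). apply H. unfold Sn. apply nth_In. rewrite S_len; auto. Qed.

Lemma memS_spec c a : memS c a = true -> exists m, m < 24 /\ Sn c m = a.
Proof. unfold memS. intro H. apply existsb_exists in H as [x [Hx E]].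
  apply mpt_eqb_spec in E. subst. apply (In_nth _ _ dflt) in Hx as [m [Hm E]].
  rewrite S_len in Hm. exists m; split; auto. Qed.

Lemma S_cell {L} (alpha:L) beta c m : m < 24 -> is_cell (interpS alpha beta (Sn c m)).
Proof. intro Hm. destruct (S_props c m Hm) as [H1 H2]. unfold interpS.
  apply cell_iff; auto. apply allsy_good; auto. Qed.

Lemma S_closed c m i s : m < 24 -> exists m', m' < 24 /\ qtm c i s (Sn c m) = Sn c m'.
Proof. intro Hm. destruct (chks c) as [_ [H _]]. unfold chk_closed in H.
  pose proof (forallb_seq _ _ _ H m ltac:(lia)) as H1. cbv beta in H1.
  rewrite forallb_forall in H1. specialize (H1 i ltac:(destruct i; simpl; tauto)).
  rewrite forallb_forall in H1. specialize (H1 s ltac:(destruct s; simpl; tauto)).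
  apply andb_true_iff in H1 as [H1 H2]. apply Nat.ltb_lt in H1. apply mpt_eqb_spec in H2.
  exists (ix c (qtm c i s (Sn c m))). auto. Qed.

Lemma S_perm c t : exists pi : nat -> nat, (forall a, a < 24 -> pi a < 24) /\
  (forall a b, a < 24 -> b < 24 -> pi a = pi b -> a = b) /\
  (forall m, m < 24 -> tinvm c t (Sn c m) = Sn c (pi m)).
Proof. destruct (chks c) as [_ [_ [H _]]]. unfold chk_perm in H.
  destruct t as [[i s] k].
  rewrite forallb_forall in H. specialize (H i ltac:(destruct i; simpl; tauto)).
  rewrite forallb_forall in H. specialize (H s ltac:(destruct s; simpl; tauto)).
  rewrite forallb_forall in H. specialize (H k ltac:(destruct k; simpl; tauto)).
  unfold chk_perm1 in H. apply andb_true_iff in H as [H1 H2].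
  exists (pit c (i,s,k)). split; [|split].
  - intros a Ha. pose proof (forallb_seq _ _ _ H1 a ltac:(lia)) as X. apply andb_true_iff in X as [X _].
    apply (proj1 (Nat.ltb_lt _ _)); auto.
  - intros a b Ha Hb E. pose proof (forallb_seq _ _ _ H2 a ltac:(lia)) as X. cbv beta in X.
    pose proof (forallb_seq _ _ _ X b ltac:(lia)) as Y. cbv beta in Y. rewrite E, Nat.eqb_refl in Y.
    simpl in Y. apply (proj1 (Nat.eqb_eq _ _)); auto.
  - intros m Hm. pose proof (forallb_seq _ _ _ H1 m ltac:(lia)) as X. apply andb_true_iff in X as [_ X].
    apply mpt_eqb_spec in X. auto. Qed.



Lemma sol_props c : (forall k, cnt (Some k) (map (fun m => msol (Sn c m)) (seq 0 24)) = 4) /\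
   msol (Sn c 22) = msol (Sn c 23).
Proof. destruct (chks c) as [_ [_ [_ [_ [H _]]]]]. unfold chk_sol in H.
  apply andb_true_iff in H as [H1 H2]. split; [|apply (proj1 (ocol_eqb_spec _ _)); exact H2].
  intro k. rewrite forallb_forall in H1. specialize (H1 k ltac:(destruct k; simpl; tauto)).
  apply Nat.eqb_eq in H1. exact H1. Qed.

Lemma word_ok c i j : i < 22 -> i < j < 24 -> chk_word c i j = true.
Proof. intros Hi Hj. destruct (chks c) as [_ [_ [_ [_ [_ H]]]]]. unfold chk_words in H.
  pose proof (forallb_seq _ _ _ H i ltac:(lia)) as X. cbv beta in X.
  apply (forallb_seq _ _ _ X j). lia. Qed.

Lemma word_effect {L} (alpha:L) beta c i j : chyp alpha beta c -> i < 22 -> i < j < 24 ->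
  (forall m, m < 24 -> Phi (map (rtw alpha beta) (word c i j)) (interpS alpha beta (Sn c m)) =
                       interpS alpha beta (Sn c (cyc i j (kk i j) m))) /\
  (forall x, is_cell x -> (forall m, m < 24 -> x <> interpS alpha beta (Sn c m)) ->
      Phi (map (rtw alpha beta) (word c i j)) x = x).
Proof. intros H Hi Hj. pose proof (word_ok c i j Hi Hj) as W. unfold chk_word in W.
  apply andb_true_iff in W as [W1 W2]. split.
  - intros m Hm. pose proof (forallb_seq _ _ _ W1 m ltac:(lia)) as X. apply mpt_eqb_spec in X.
    unfold interpS. rewrite (proj1 (Phi_interp alpha beta c p0 _ _ H (allsy_good _ _ _ _ (proj1 (S_props c m Hm))))).
    rewrite X. reflexivity.
  - intros x Hx Hn. destruct (absp_prop alpha beta c x H) as [E [G I]].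
    rewrite forallb_forall in W2. specialize (W2 _ I).
    assert (Hc : mcell (absp alpha beta c x) = true).
    { apply (cell_iff alpha beta x); auto. rewrite E; auto. }
    rewrite Hc in W2. simpl in W2.
    destruct (memS c (absp alpha beta c x)) eqn:Hm.
    + exfalso. apply memS_spec in Hm as [m [Hm1 Hm2]]. apply (Hn m Hm1).
      rewrite <- E, <- Hm2. apply allsy_interp. apply S_props; auto.
    + simpl in W2. apply mpt_eqb_spec in W2.
      rewrite <- E at 1. rewrite (proj1 (Phi_interp alpha beta c x _ _ H G)). rewrite W2. exact E.
Qed.

Lemma twist_perm {L} (alpha:L) beta c (sg : twist L) : chyp alpha beta c ->
  exists pi : nat -> nat, (forall a, a < 24 -> pi a < 24) /\
  (forall a b, a < 24 -> b < 24 -> pi a = pi b -> a = b) /\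
  (forall m, m < 24 -> twist_inv sg (interpS alpha beta (Sn c m)) = interpS alpha beta (Sn c (pi m))).
Proof. intro H. destruct sg as [i a k].
  destruct (classic (exists s, a = esym alpha beta s)) as [[s ->]|Hn].
  - destruct (S_perm c (i,s,k)) as [pi [P1 [P2 P3]]]. exists pi. split; [auto|split; [auto|]].
    intros m Hm. unfold twist_inv; simpl. unfold interpS.
    rewrite (proj1 (iter_interp alpha beta c p0 _ i s _ H (allsy_good _ _ _ _ (proj1 (S_props c m Hm))))).
    rewrite <- P3 by auto. reflexivity.
  - exists (fun m => m). split; [auto|split; [auto|]]. intros m Hm.
    unfold twist_inv; simpl. apply iter_fix. unfold qt.
    destruct (excluded_middle_informative _) as [E|E]; auto. exfalso.
    destruct (S_props c m Hm) as [A1 _]. unfold interpS in E. rewrite pcoord_interp in E.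
    destruct (Sn c m) as [[x|] [y|] [z|]]; simpl in A1; try discriminate;
    destruct i; simpl in E; apply Hn; eauto.
Qed.

Strategy expand [allchk chk_S chk_closed chk_perm chk_perm1 chk_paths chk_sol chk_words chk_word].

Definition repP {L} (alpha:L) (beta:Ldag L) : point L := mkP (Fin (LPos alpha)) (Fin beta) PInf.

Lemma rep_interp {L} (alpha:L) beta c : chyp alpha beta c -> repP alpha beta = interpS alpha beta (rep0 c).
Proof. intro H. unfold repP, interpS, interp, rep0; simpl. rewrite !(e_norm alpha beta c) by auto. reflexivity. Qed.

Lemma paths_props c : (forall m, m < 24 -> runpath c (nth m (Pd c) []) (rep0 c) = Sn c m) /\
  ix c (rep0 c) < 24 /\ Sn c (ix c (rep0 c)) = rep0 c.
Proof. destruct (chks c) as [_ [_ [_ [H _]]]]. unfold chk_paths in H.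
  apply andb_prop in H as [H H3]. apply andb_prop in H as [H1 H2].
  split; [|split].
  - intros m Hm. pose proof (forallb_seq _ _ _ H1 m ltac:(lia)) as X. cbv beta in X.
    apply mpt_eqb_spec in X. exact X.
  - apply (proj1 (Nat.ltb_lt _ _)). exact H2.
  - apply mpt_eqb_spec. exact H3. Qed.

Lemma runpath_cluster {L} (alpha:L) beta c P q : chyp alpha beta c -> good alpha beta p0 q ->
  same_cluster (interp alpha beta p0 q) (interp alpha beta p0 (runpath c P q)).
Proof. intros H. revert q; induction P as [|[i s] P IH]; intros q G; simpl.
  - apply rt_refl.
  - destruct (qt_interp alpha beta c p0 q i s H G) as [E G'].
    eapply rt_trans; [|apply IH; exact G'].
    apply rt_step. exists i, (esym alpha beta s). symmetry; exact E. Qed.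

Lemma S_in_cluster {L} (alpha:L) beta c m : chyp alpha beta c -> m < 24 ->
  same_cluster (repP alpha beta) (interpS alpha beta (Sn c m)).
Proof. intros H Hm. rewrite (rep_interp alpha beta c H).
  destruct (paths_props c) as [P _]. rewrite <- (P m Hm). unfold interpS.
  apply runpath_cluster; auto. destruct (paths_props c) as [_ [R1 R2]].
  rewrite <- R2. apply allsy_good. apply S_props; auto. Qed.

Definition inS {L} (alpha:L) beta c (x : point L) := exists m, m < 24 /\ x = interpS alpha beta (Sn c m).

Lemma cluster_in_S {L} (alpha:L) beta c x : chyp alpha beta c ->
  same_cluster (repP alpha beta) x -> inS alpha beta c x.
Proof. intros H Hc.
  assert (Hstep : forall y z, (exists i a, z = qt i a y) -> inS alpha beta c y -> inS alpha beta c z).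
  { intros y z [i [a ->]] [m [Hm ->]].
    destruct (classic (exists s, a = esym alpha beta s)) as [[s ->]|Hn].
    - destruct (S_closed c m i s Hm) as [m' [Hm' E]]. exists m'. split; auto.
      unfold interpS. rewrite (proj1 (qt_interp alpha beta c p0 _ i s H (allsy_good _ _ _ _ (proj1 (S_props c m Hm))))).
      rewrite E. reflexivity.
    - exists m. split; auto. unfold qt.
      destruct (excluded_middle_informative _) as [E|E]; auto. exfalso.
      destruct (S_props c m Hm) as [A1 _]. unfold interpS in E. rewrite pcoord_interp in E.
      destruct (Sn c m) as [[x'|] [y'|] [z'|]]; simpl in A1; try discriminate;
      destruct i; simpl in E; apply Hn; eauto. }
  assert (H0 : inS alpha beta c (repP alpha beta)).
  { destruct (paths_props c) as [_ [R1 R2]]. exists (ix c (rep0 c)). split; auto.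
    rewrite R2. apply rep_interp; auto. }
  unfold same_cluster in Hc. 
  assert (G : forall u v, clos_refl_trans _ (fun p q => exists i a, q = qt i a p) u v -> inS alpha beta c u -> inS alpha beta c v).
  { intros u v Huv. induction Huv; eauto. }
  eauto.
Qed.

Strategy expand [allchk chk_S chk_closed chk_perm chk_perm1 chk_paths chk_sol chk_words chk_word].

Definition colL {L} (alpha:L) beta c (g : config L) :=
  map (fun m => g (interpS alpha beta (Sn c m))) (seq 0 24).
Definition solL c := map (fun m => msol (Sn c m)) (seq 0 24).

Lemma solved_col {L} (alpha:L) beta c : colL alpha beta c (solved L) = solL c.
Proof. unfold colL, solL. apply map_ext_in. intros m Hm. apply in_seq in Hm.
  apply solved_interp. apply S_props. lia. Qed.

Lemma colL_ext {L} (alpha:L) beta c (g1 g2 : config L) :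
  (forall x, is_cell x -> g1 x = g2 x) -> colL alpha beta c g1 = colL alpha beta c g2.
Proof. intro H. unfold colL. apply map_ext_in. intros m Hm. apply in_seq in Hm.
  apply H. apply S_cell. lia. Qed.

Lemma invariant {L} (alpha:L) beta c {W} (lt : W -> W -> Prop) sigma (F : option W -> config L) :
  chyp alpha beta c -> well_order lt -> Run lt sigma (solved L) F ->
  forall s k, cnt (Some k) (colL alpha beta c (F s)) <= 4.
Proof.
  intros H [wf [tr tot]] HR.
  intro s. induction s as [s IH] using (well_founded_ind (slt_wf lt wf)).
  intro k. destruct (HR s) as [Hz [Hs Hl]].
  destruct (classic (exists t, slt lt t s)) as [Hex|Hno].
  2:{ assert (Hnt : forall t, ~ slt lt t s) by (intros t Ht; apply Hno; eauto).
      rewrite (colL_ext alpha beta c _ _ (Hz Hnt)). rewrite solved_col.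
      rewrite (proj1 (sol_props c)). lia. }
  destruct (classic (forall t, slt lt t s -> exists u, slt lt t u /\ slt lt u s)) as [Hlim|Hsuc].
  -
    assert (Hev : forall m, m < 24 -> F s (interpS alpha beta (Sn c m)) = Some k ->
       exists t, slt lt t s /\ forall u, (u = t \/ slt lt t u) -> slt lt u s ->
           F u (interpS alpha beta (Sn c m)) = Some k).
    { intros m Hm E. destruct (Hl Hex Hlim _ (S_cell alpha beta c m Hm)) as [L1 L2].
      destruct (classic (exists v t, slt lt t s /\ forall u, (u = t \/ slt lt t u) -> slt lt u s ->
                   F u (interpS alpha beta (Sn c m)) = v)) as [[v [t [Ht Hu]]]|Hn].
      - assert (v = Some k) by (rewrite <- E; symmetry; apply L1; eauto). subst v. eauto.
      - rewrite (L2 Hn) in E. discriminate. }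
    assert (Hmax : forall l, (forall m, In m l -> m < 24) -> exists u, slt lt u s /\ forall m, In m l ->
        F s (interpS alpha beta (Sn c m)) = Some k -> forall u', (u' = u \/ slt lt u u') -> slt lt u' s ->
        F u' (interpS alpha beta (Sn c m)) = Some k).
    { induction l as [|m l IHl]; intro Hl24.
      - destruct Hex as [t Ht]. exists t. split; auto. intros m [].
      - destruct IHl as [u [Hu Hu2]]. { intros; apply Hl24; right; auto. }
        destruct (classic (F s (interpS alpha beta (Sn c m)) = Some k)) as [E|E].
        + destruct (Hev m (Hl24 m (or_introl eq_refl)) E) as [t [Ht Ht2]].
          destruct u as [u|]; [|contradiction]. destruct t as [t|]; [|contradiction].
          destruct (tot u t) as [Hut|[Hut|Hut]].
          * exists (Some t). split; auto. intros m' [<-|Hm'] E' u' Hu' Hu's.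
            -- apply Ht2; auto.
            -- apply Hu2; auto. right. destruct Hu' as [->|Hu']; simpl; auto.
               destruct u' as [u'|]; simpl in *; eauto.
          * subst. exists (Some t). split; auto. intros m' [<-|Hm'] E'; auto.
          * exists (Some u). split; auto. intros m' [<-|Hm'] E' u' Hu' Hu's.
            -- apply Ht2; auto. right. destruct Hu' as [->|Hu']; simpl; auto.
               destruct u' as [u'|]; simpl in *; eauto.
            -- apply Hu2; auto.
        + exists u. split; auto. intros m' [<-|Hm'] E'; [contradiction|]. apply Hu2; auto. }
    destruct (Hmax (seq 0 24)) as [u [Hu Hu2]]. { intros m Hm; apply in_seq in Hm; lia. }
    eapply Nat.le_trans; [|apply (IH u Hu k)].
    unfold colL. apply cnt_mono. intros m Hm E. apply (Hu2 m Hm E u (or_introl eq_refl) Hu).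
  -
    apply not_all_ex_not in Hsuc as [t Ht].
    apply imply_to_and in Ht as [Hts Hnu].
    destruct t as [w|]; [|contradiction].
    assert (Hnb : forall t, ~ (slt lt (Some w) t /\ slt lt t s)).
    { intros t [A1 A2]. apply Hnu. eauto. }
    destruct (twist_perm alpha beta c (sigma w) H) as [pi [P1 [P2 P3]]].
    assert (E : colL alpha beta c (F s) = map (fun m => F (Some w) (interpS alpha beta (Sn c m))) (map pi (seq 0 24))).
    { unfold colL. rewrite map_map. apply map_ext_in. intros m Hm. apply in_seq in Hm.
      rewrite (Hs w Hts Hnb _ (S_cell alpha beta c m ltac:(lia))). unfold act. rewrite P3 by lia. reflexivity. }
    rewrite E. rewrite (cnt_perm _ _ (colL alpha beta c (F (Some w)))).
    + apply IH. exact Hts.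
    + unfold colL. apply Permutation_map. apply perm_of_inj; auto.
Qed.

Strategy expand [allchk chk_S chk_closed chk_perm chk_perm1 chk_paths chk_sol chk_words chk_word].

Lemma colL_split {L} (alpha:L) beta c g i : i <= 24 ->
  colL alpha beta c g = map (fun m => g (interpS alpha beta (Sn c m))) (seq 0 i) ++
                        map (fun m => g (interpS alpha beta (Sn c m))) (seq i (24 - i)).
Proof. intro Hi. unfold colL. rewrite <- map_app. f_equal.
  replace 24 with (i + (24 - i)) at 1 by lia. rewrite seq_app. reflexivity. Qed.
Lemma solL_split c i : i <= 24 ->
  solL c = map (fun m => msol (Sn c m)) (seq 0 i) ++ map (fun m => msol (Sn c m)) (seq i (24 - i)).
Proof. intro Hi. unfold solL. rewrite <- map_app. f_equal.
  replace 24 with (i + (24 - i)) at 1 by lia. rewrite seq_app. reflexivity. Qed.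

Lemma suffix_cnt {L} (alpha:L) beta c (g : config L) i : i <= 24 ->
  (forall m, m < i -> g (interpS alpha beta (Sn c m)) = msol (Sn c m)) ->
  (forall x, cnt x (colL alpha beta c g) = cnt x (solL c)) ->
  forall x, cnt x (map (fun m => g (interpS alpha beta (Sn c m))) (seq i (24 - i))) =
            cnt x (map (fun m => msol (Sn c m)) (seq i (24 - i))).
Proof. intros Hi Hp Hc x. specialize (Hc x).
  rewrite (colL_split alpha beta c g i Hi), (solL_split c i Hi), !cnt_app in Hc.
  assert (E : map (fun m => g (interpS alpha beta (Sn c m))) (seq 0 i) = map (fun m => msol (Sn c m)) (seq 0 i)).
  { apply map_ext_in. intros m Hm. apply in_seq in Hm. apply Hp. lia. }
  rewrite E in Hc. lia. Qed.

Lemma cnt_pos_in x l : 0 < cnt x l -> exists y, In y l /\ y = x.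
Proof. unfold cnt. induction l as [|a l IH]; simpl; [lia|].
  destruct (ocol_eqb x a) eqn:E; simpl; intro H.
  - exists a. split; auto. symmetry. apply (proj1 (ocol_eqb_spec _ _)). exact E.
  - destruct (IH H) as [y [Hy Ey]]. eauto. Qed.

Lemma cnt_in x l : In x l -> 0 < cnt x l.
Proof. unfold cnt. induction l as [|a l IH]; simpl; [tauto|].
  intros [->|Hx].
  - assert (ocol_eqb x x = true) as -> by (apply (proj2 (ocol_eqb_spec _ _)); auto). simpl. lia.
  - destruct (ocol_eqb x a); simpl; [lia|auto]. Qed.

Lemma greedy {L} (alpha:L) beta c : chyp alpha beta c -> forall n i (g : config L), i + n = 22 ->
  (forall m, m < i -> g (interpS alpha beta (Sn c m)) = msol (Sn c m)) ->
  (forall x, cnt x (colL alpha beta c g) = cnt x (solL c)) ->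
  exists w : list mtw,
    (forall m, m < 24 -> apply_list (map (rtw alpha beta) w) g (interpS alpha beta (Sn c m)) = msol (Sn c m)) /\
    (forall x, is_cell x -> (forall m, m < 24 -> x <> interpS alpha beta (Sn c m)) ->
       apply_list (map (rtw alpha beta) w) g x = g x).
Proof.
  intro H. induction n as [|n IH]; intros i g Hn Hp Hc.
  - assert (i = 22) by lia. subst i. exists []. split; [|simpl; auto].
    intros m Hm. simpl. change (apply_list [] g) with g.
    assert (Hs := suffix_cnt alpha beta c g 22 ltac:(lia) Hp Hc).
    destruct (sol_props c) as [_ E23].
    specialize (Hs (msol (Sn c 22))). simpl in Hs. rewrite <- E23 in Hs.
    unfold cnt in Hs. simpl in Hs.
    assert (ocol_eqb (msol (Sn c 22)) (msol (Sn c 22)) = true) as Er by (apply (proj2 (ocol_eqb_spec _ _)); auto).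
    rewrite Er in Hs. simpl in Hs.
    destruct (ocol_eqb (msol (Sn c 22)) (g (interpS alpha beta (Sn c 22)))) eqn:E1;
    destruct (ocol_eqb (msol (Sn c 22)) (g (interpS alpha beta (Sn c 23)))) eqn:E2; simpl in Hs; try lia.
    apply (proj1 (ocol_eqb_spec _ _)) in E1, E2.
    destruct (Nat.lt_ge_cases m 22) as [Hm2|Hm2]; [auto|].
    assert (m = 22 \/ m = 23) as [->| ->] by lia; [auto|]. rewrite <- E23. auto.
  - destruct (classic (g (interpS alpha beta (Sn c i)) = msol (Sn c i))) as [Ei|Ei].
    + apply (IH (S i) g); auto; [lia|]. intros m Hm. destruct (Nat.eq_dec m i) as [->|?]; auto. apply Hp. lia.
    +
      assert (Hs := suffix_cnt alpha beta c g i ltac:(lia) Hp Hc (msol (Sn c i))).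
      assert (Hin : 0 < cnt (msol (Sn c i)) (map (fun m => msol (Sn c m)) (seq i (24 - i)))).
      { apply cnt_in. apply (in_map (fun m => msol (Sn c m))). apply in_seq. lia. }
      rewrite <- Hs in Hin. apply cnt_pos_in in Hin as [y [Hy Ey]].
      apply in_map_iff in Hy as [j [Ej Hj]]. apply in_seq in Hj. rewrite Ey in Ej.
      assert (Hij : j <> i) by (intro; subst; auto).
      assert (Hi22 : i < 22) by lia.
      destruct (word_effect alpha beta c i j H Hi22 ltac:(lia)) as [W1 W2].
      set (k := kk i j) in *.
      assert (Hk : i < k < 24 /\ k <> j) by (unfold k, kk; destruct (Nat.eqb_spec j (i+1)); lia).
      set (g' := apply_list (map (rtw alpha beta) (word c i j)) g).
      assert (G1 : forall m, m < 24 -> g' (interpS alpha beta (Sn c m)) = g (interpS alpha beta (Sn c (cyc i j k m)))).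
      { intros m Hm. unfold g'. rewrite apply_list_Phi, W1 by auto. reflexivity. }
      assert (G2 : forall x, is_cell x -> (forall m, m < 24 -> x <> interpS alpha beta (Sn c m)) -> g' x = g x).
      { intros x Hx Hnx. unfold g'. rewrite apply_list_Phi, W2 by auto. reflexivity. }
      assert (Hcyc : forall m, m < 24 -> cyc i j k m < 24).
      { intros m Hm. unfold cyc. destruct (Nat.eqb_spec m i); destruct (Nat.eqb_spec m j); destruct (Nat.eqb_spec m k); lia. }
      destruct (IH (S i) g' ltac:(lia)) as [w2 [R1 R2]].
      * intros m Hm. rewrite G1 by lia. destruct (Nat.eq_dec m i) as [->|Hmi].
        -- unfold cyc. rewrite Nat.eqb_refl. exact Ej.
        -- unfold cyc. destruct (Nat.eqb_spec m i); [lia|]. destruct (Nat.eqb_spec m j); [lia|].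
           destruct (Nat.eqb_spec m k); [lia|]. apply Hp. lia.
      * intro x. rewrite <- (Hc x). 
        assert (E : colL alpha beta c g' = map (fun m => g (interpS alpha beta (Sn c m))) (map (cyc i j k) (seq 0 24))).
        { unfold colL. rewrite map_map. apply map_ext_in. intros m Hm. apply in_seq in Hm. apply G1. lia. }
        rewrite E. apply cnt_perm. unfold colL. apply Permutation_map. apply perm_of_inj; auto.
        intros a b Ha Hb. unfold cyc.
        destruct (Nat.eqb_spec a i); destruct (Nat.eqb_spec a j); destruct (Nat.eqb_spec a k);
        destruct (Nat.eqb_spec b i); destruct (Nat.eqb_spec b j); destruct (Nat.eqb_spec b k); lia.
      * exists (word c i j ++ w2). split.
        -- intros m Hm. rewrite map_app. unfold apply_list. rewrite fold_left_app. apply R1; auto.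
        -- intros x Hx Hnx. rewrite map_app. unfold apply_list. rewrite fold_left_app.
           change (apply_list (map (rtw alpha beta) w2) g' x = g x). rewrite R2 by auto. apply G2; auto.
Qed.

Strategy expand [allchk chk_S chk_closed chk_perm chk_perm1 chk_paths chk_sol chk_words chk_word].

Lemma cnt_sum6 l : length l = cnt None l + cnt (Some Red) l + cnt (Some White) l + cnt (Some Green) l
  + cnt (Some Orange) l + cnt (Some Yellow) l + cnt (Some Blue) l.
Proof. rewrite cnt_sum. simpl. lia. Qed.
Lemma colL_len {L} (alpha:L) beta c g : length (colL alpha beta c g) = 24.
Proof. unfold colL. rewrite length_map, length_seq. reflexivity. Qed.
Lemma solL_len c : length (solL c) = 24.
Proof. unfold solL. rewrite length_map, length_seq. reflexivity. Qed.

Lemma main_gen {L} (alpha:L) beta c (f : config L) : chyp alpha beta c ->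
  legal f -> accessible (solved L) f ->
  exists s : list (twist L),
    (forall t, In t s ->
       is_face t \/
       tw_level t = Fin (LPos alpha) \/ tw_level t = Fin (LNeg alpha) \/
       tw_level t = Fin beta \/ tw_level t = Fin (ldneg beta)) /\
    (forall x, is_cell x -> same_cluster (mkP (Fin (LPos alpha)) (Fin beta) PInf) x ->
       apply_list s f x = solved L x) /\
    (forall x, is_cell x -> ~ same_cluster (mkP (Fin (LPos alpha)) (Fin beta) PInf) x ->
       apply_list s f x = f x).
Proof.
  intros H Hlegal [W [lt [sigma [F [Hwo [HR Hfin]]]]]].
  assert (Hle : forall k, cnt (Some k) (colL alpha beta c f) <= 4).
  { intro k. rewrite (colL_ext alpha beta c f (F None)) by (intros; symmetry; auto).
    apply (invariant alpha beta c lt sigma F H Hwo HR). }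
  assert (Hnone : cnt None (colL alpha beta c f) = 0).
  { destruct (Nat.eq_dec (cnt None (colL alpha beta c f)) 0) as [?|Hne]; auto.
    destruct (cnt_pos_in None (colL alpha beta c f) ltac:(lia)) as [y [Hy Ey]].
    unfold colL in Hy. apply in_map_iff in Hy as [m [Em Hm]]. apply in_seq in Hm.
    exfalso. apply (Hlegal _ (S_cell alpha beta c m ltac:(lia))). congruence. }
  assert (Hsum := cnt_sum6 (colL alpha beta c f)). rewrite colL_len in Hsum.
  assert (Hsol := cnt_sum6 (solL c)). rewrite solL_len in Hsol.
  destruct (sol_props c) as [Hs4 _]. fold (solL c) in Hs4.
  assert (Hc : forall x, cnt x (colL alpha beta c f) = cnt x (solL c)).
  { pose proof (Hle Red). pose proof (Hle White). pose proof (Hle Green).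
    pose proof (Hle Orange). pose proof (Hle Yellow). pose proof (Hle Blue).
    pose proof (Hs4 Red). pose proof (Hs4 White). pose proof (Hs4 Green).
    pose proof (Hs4 Orange). pose proof (Hs4 Yellow). pose proof (Hs4 Blue).
    intros [k|]; [destruct k|]; lia. }
  destruct (greedy alpha beta c H 22 0 f eq_refl ltac:(intros; lia) Hc) as [w [R1 R2]].
  exists (map (rtw alpha beta) w). split; [|split].
  - intros t Ht. apply in_map_iff in Ht as [[[i s] k] [<- _]]. simpl.
    destruct s; simpl; [right; left|right; right; left|right; right; right; left|right; right; right; right|left|left];
    unfold is_face, is_inf; simpl; auto.
  - intros x Hx Hcl. destruct (cluster_in_S alpha beta c x H Hcl) as [m [Hm ->]].
    rewrite R1 by auto. symmetry. apply solved_interp. apply S_props; auto.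
  - intros x Hx Hcl. apply R2; auto. intros m Hm E. apply Hcl. rewrite E.
    apply (S_in_cluster alpha beta c m H Hm).
Qed.

Theorem lemma5p3 (L : Type) (HL : infinite_type L) (f : config L)
  (Hlegal : legal f) (Hacc : accessible (solved L) f)
  (alpha : L) (beta : Ldag L) (Hbeta : beta = LZero \/ exists b, beta = LPos b) :
  exists s : list (twist L),
    (forall t, In t s ->
       is_face t \/
       tw_level t = Fin (LPos alpha) \/ tw_level t = Fin (LNeg alpha) \/
       tw_level t = Fin beta \/ tw_level t = Fin (ldneg beta)) /\
    (forall c, is_cell c -> same_cluster (mkP (Fin (LPos alpha)) (Fin beta) PInf) c ->
       apply_list s f c = solved L c) /\
    (forall c, is_cell c -> ~ same_cluster (mkP (Fin (LPos alpha)) (Fin beta) PInf) c ->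
       apply_list s f c = f c).
Proof.
  destruct Hbeta as [Hz|[b Hb]].
  - apply (main_gen alpha beta Zer); auto.
  - destruct (classic (b = alpha)) as [->|Hne].
    + apply (main_gen alpha beta Sam); auto.
    + apply (main_gen alpha beta Gen); auto. simpl. eauto.
Qed.
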